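(* There exist zero mean curvature immersions (ZMC-immersions) satisfying each of the following three conditions, respectively: (i) ZMC-surfaces in $\mathcal{Z}^0_{I}$ without space-like part; (ii) ZMC-surfaces in $\mathcal{Z}^0_{I}$ without time-like part; (iii) ZMC-surfaces in $\mathcal{Z}^0_{I\!I}$ which change causal type.
   Context: Let $\boldsymbol{R}^3_1$ be Lorentz-Minkowski 3-space with coordinates $(t,x,y)$ and inner product of signature $(-++)$. Consider germs of real analytic immersions $F(x,y)=(f(x,y),x,y)$ near the origin $o=(0,0)$ with $f(0,0)=f_x(0,0)=0$, $f_y(0,0)=1$ (so $o$ is a light-like point). Set $B_F:=1-f_x^2-f_y^2$ and $A_F:=(1-f_x^2)f_{yy}+2f_xf_yf_{xy}+(1-f_y^2)f_{xx}$; a point is space-like if $B_F>0$ and time-like if $B_F<0$, and the set where $B_F\neq 0$ is assumed open and dense. $\mathcal{Z}^\omega$ denotes the set of such real analytic germs with $A_F\equiv 0$ (zero mean curvature), and $\mathcal{Z}^\omega_b$ the subset with $\nabla B_F(0,0)=\mathbf{0}$ (degenerate light-like point). For $F\in\mathcal{Z}^\omega_b$ one can write $f(x,y)=y+\frac{\alpha_F(y)}{2}x^2+\frac{\beta_F(y)}{3}x^3+h(x,y)x^4$ with real analytic $\alpha_F,\beta_F,h$, and there is a constant $\mu_F$ (the characteristic) with $\alpha_F'+\alpha_F^2+\mu_F=0$. The class $\mathcal{Z}^0_{I}$ consists of $F\in\mathcal{Z}^\omega_b$ with $\mu_F=0$ and $\alpha_F\equiv 0$; the class $\mathcal{Z}^0_{I\!I}$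 consists of $F\in\mathcal{Z}^\omega_b$ with $\mu_F=0$ and $\alpha_F=1/(y+c)$ for some constant $c\neq 0$. A surface changes causal type if it has both space-like and time-like points near $o$ (one side of the light-like line is space-like and the other time-like). *)

(* Defs.v *)
From Stdlib Require Import Reals.
From Coquelicot Require Import Coquelicot.
Open Scope R_scope.

Definition box (r x y : R) : Prop := Rabs x < r /\ Rabs y < r.

Definition analytic0 (f : R -> R -> R) : Prop :=
  exists r : R, 0 < r /\ exists a : nat -> nat -> R,
    (forall i, ex_series (fun j => Rabs (a i j) * r ^ (i + j))) /\
    ex_series (fun i => Series (fun j => Rabs (a i j) * r ^ (i + j))) /\
    forall x y, box r x y ->
      is_series (fun i => Series (fun j => a i j * x ^ i * y ^ j)) (f x y).

Definition analytic1 (g : R -> R) : Prop := analytic0 (fun _ y => g y).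

Definition Dx (f : R -> R -> R) (x y : R) : R := Derive (fun t => f t y) x.
Definition Dy (f : R -> R -> R) (x y : R) : R := Derive (fun t => f x t) y.

(* B_F and A_F for F(x,y) = (f(x,y), x, y). *)
Definition BF (f : R -> R -> R) (x y : R) : R :=
  1 - (Dx f x y) ^ 2 - (Dy f x y) ^ 2.

Definition AF (f : R -> R -> R) (x y : R) : R :=
  (1 - (Dx f x y) ^ 2) * Dy (Dy f) x y
  + 2 * Dx f x y * Dy f x y * Dx (Dy f) x y
  + (1 - (Dy f x y) ^ 2) * Dx (Dx f) x y.

(* o is a light-like point with the normalization of the paper. *)
Definition normalized (f : R -> R -> R) : Prop :=
  f 0 0 = 0 /\ Dx f 0 0 = 0 /\ Dy f 0 0 = 1.

(* The set {B_F <> 0} is dense near o (openness is automatic by continuity). *)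
Definition nonlightlike_dense (f : R -> R -> R) : Prop :=
  exists r : R, 0 < r /\
    forall x y, box r x y -> forall eps, 0 < eps ->
      exists x' y', box r x' y' /\ Rabs (x' - x) < eps /\
                    Rabs (y' - y) < eps /\ BF f x' y' <> 0.

Definition Zomega (f : R -> R -> R) : Prop :=
  analytic0 f /\ normalized f /\ nonlightlike_dense f /\
  exists r : R, 0 < r /\ forall x y, box r x y -> AF f x y = 0.

Definition Zomega_b (f : R -> R -> R) : Prop :=
  Zomega f /\ Dx (BF f) 0 0 = 0 /\ Dy (BF f) 0 0 = 0.

Definition expansion (f : R -> R -> R) (alpha beta : R -> R) (h : R -> R -> R)
  : Prop :=
  analytic1 alpha /\ analytic1 beta /\ analytic0 h /\
  exists r : R, 0 < r /\ forall x y, box r x y ->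
    f x y = y + alpha y / 2 * x ^ 2 + beta y / 3 * x ^ 3 + h x y * x ^ 4.

Definition characteristic (alpha : R -> R) (mu : R) : Prop :=
  exists r : R, 0 < r /\ forall y, Rabs y < r ->
    Derive alpha y + (alpha y) ^ 2 + mu = 0.

Definition Z0_I (f : R -> R -> R) : Prop :=
  Zomega_b f /\
  exists alpha beta h, expansion f alpha beta h /\ characteristic alpha 0 /\
    exists r : R, 0 < r /\ forall y, Rabs y < r -> alpha y = 0.

Definition Z0_II (f : R -> R -> R) : Prop :=
  Zomega_b f /\
  exists alpha beta h, expansion f alpha beta h /\ characteristic alpha 0 /\
    exists c : R, c <> 0 /\
    exists r : R, 0 < r /\ forall y, Rabs y < r -> alpha y = 1 / (y + c).

Definition no_spacelike_part (f : R -> R -> R) : Prop :=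
  exists r : R, 0 < r /\ forall x y, box r x y -> BF f x y <= 0.

Definition no_timelike_part (f : R -> R -> R) : Prop :=
  exists r : R, 0 < r /\ forall x y, box r x y -> 0 <= BF f x y.

Definition changes_causal_type (f : R -> R -> R) : Prop :=
  forall eps : R, 0 < eps ->
    (exists x y, box eps x y /\ 0 < BF f x y) /\
    (exists x y, box eps x y /\ BF f x y < 0).

(* Main.v *)
Require Import Defs.
From Stdlib Require Import Reals Lra Lia Psatz.
From Coquelicot Require Import Coquelicot.
Require Import Defs.
Open Scope R_scope.

Lemma is_series_plusR (a b : nat -> R) la lb :
  is_series a la -> is_series b lb -> is_series (fun n => a n + b n) (la + lb).
Proof. intros Ha Hb. exact (is_series_plus _ _ _ _ Ha Hb). Qed.

Lemma is_series_scalR (c : R) (a : nat -> R) l :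
  is_series a l -> is_series (fun n => c * a n) (c * l).
Proof. intros Ha. exact (is_series_scal_l c _ _ Ha). Qed.

Lemma ex_series_plusR (a b : nat -> R) :
  ex_series a -> ex_series b -> ex_series (fun n => a n + b n).
Proof. intros Ha Hb. exact (ex_series_plus _ _ Ha Hb). Qed.

Lemma ex_series_scalR (c : R) (a : nat -> R) :
  ex_series a -> ex_series (fun n => c * a n).
Proof. intros Ha. exact (ex_series_scal_l c _ Ha). Qed.

Lemma ex_series_leR (a b : nat -> R) :
  (forall n, Rabs (a n) <= b n) -> ex_series b -> ex_series a.
Proof. intros H Hb. apply (ex_series_le a b); auto. Qed.

Lemma sum_f_R0_eventually (u : nat -> R) (N : nat) :
  (forall n, (N < n)%nat -> u n = 0) ->
  forall n, (N <= n)%nat -> sum_f_R0 u n = sum_f_R0 u N.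
Proof.
  intros H n Hn. induction Hn as [|n Hn IH]; auto.
  simpl. rewrite IH, H by lia. ring.
Qed.

Lemma is_series_fin (u : nat -> R) (N : nat) :
  (forall n, (N < n)%nat -> u n = 0) -> is_series u (sum_f_R0 u N).
Proof.
  intros H. apply is_series_Reals. intros eps He. exists N. intros n Hn.
  rewrite (sum_f_R0_eventually u N H n) by lia. unfold R_dist.
  replace (sum_f_R0 u N - sum_f_R0 u N) with 0 by ring. rewrite Rabs_R0. lra.
Qed.

Lemma is_series_single0 (c : R) (u : nat -> R) :
  u 0%nat = c -> (forall n, (0 < n)%nat -> u n = 0) -> is_series u c.
Proof. intros H0 H. pose proof (is_series_fin u 0 H). simpl in H1. now rewrite <- H0. Qed.

Lemma is_series_zero (u : nat -> R) : (forall n, u n = 0) -> is_series u 0.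
Proof. intros H. apply (is_series_single0 0 u); auto. Qed.

Lemma Series_zero (u : nat -> R) : (forall n, u n = 0) -> Series u = 0.
Proof. intros H. apply is_series_unique. now apply is_series_zero. Qed.

Lemma Series_nonneg (u : nat -> R) : (forall n, 0 <= u n) -> ex_series u -> 0 <= Series u.
Proof.
  intros H Hu. rewrite <- (Series_zero (fun _ => 0)) by auto.
  apply Series_le; auto. intros n; split; [lra| apply H].
Qed.

Lemma Series_le_gen (a b : nat -> R) :
  (forall n, a n <= b n) -> ex_series a -> ex_series b -> Series a <= Series b.
Proof.
  intros H Ha Hb.
  assert (E: Series (fun n => b n + (-1) * a n) = Series b + (-1) * Series a).
  { rewrite Series_plus; auto. rewrite Series_scal_l. auto. now apply ex_series_scalR. }
  assert (0 <= Series (fun n => b n + (-1) * a n)).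
  { apply Series_nonneg. intros n; specialize (H n); lra.
    apply ex_series_plusR; auto. now apply ex_series_scalR. }
  lra.
Qed.

Definition arr := nat -> nat -> R.
Definition DS (a : arr) (x y : R) : R :=
  Series (fun i => Series (fun j => a i j * x ^ i * y ^ j)).
Definition AS (a : arr) (r : R) : Prop :=
  (forall i, ex_series (fun j => Rabs (a i j) * r ^ (i + j))) /\
  ex_series (fun i => Series (fun j => Rabs (a i j) * r ^ (i + j))).
Definition DSS (a : arr) (x y l : R) : Prop :=
  (forall i, ex_series (fun j => a i j * x ^ i * y ^ j)) /\
  is_series (fun i => Series (fun j => a i j * x ^ i * y ^ j)) l.
Definition Rep (rho : R) (a : arr) (F : R -> R -> R) : Prop :=
  (forall r, 0 <= r < rho -> AS a r) /\
  (forall x y, Rabs x < rho -> Rabs y < rho -> F x y = DS a x y).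

Lemma pow_abs_le (x r : R) (n : nat) : Rabs x <= r -> Rabs (x ^ n) <= r ^ n.
Proof.
  intros H. rewrite <- RPow_abs. apply pow_incr. split; auto. apply Rabs_pos.
Qed.

Lemma term_bound (c x y r : R) (i j : nat) : Rabs x <= r -> Rabs y <= r ->
  Rabs (c * x ^ i * y ^ j) <= Rabs c * r ^ (i + j).
Proof.
  intros Hx Hy. rewrite !Rabs_mult, pow_add, <- Rmult_assoc.
  pose proof (pow_abs_le x r i Hx). pose proof (pow_abs_le y r j Hy).
  pose proof (Rabs_pos c). pose proof (Rabs_pos (x^i)). pose proof (Rabs_pos (y^j)).
  apply Rmult_le_compat; auto. apply Rmult_le_pos; auto.
  apply Rmult_le_compat_l; auto.
Qed.

Lemma AS_DSS (a : arr) (r x y : R) : AS a r -> Rabs x <= r -> Rabs y <= r ->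
  DSS a x y (DS a x y).
Proof.
  intros [H1 H2] Hx Hy.
  assert (Hin : forall i, ex_series (fun j => a i j * x ^ i * y ^ j)).
  { intros i. apply (ex_series_leR _ _ (fun j => term_bound _ _ _ _ i j Hx Hy)), H1. }
  split; auto. apply Series_correct.
  apply (ex_series_leR _ (fun i => Series (fun j => Rabs (a i j) * r ^ (i + j)))); auto.
  intros i. eapply Rle_trans. apply Series_Rabs.
  - apply (ex_series_leR _ _ (fun j => Rle_trans _ _ _ (Req_le _ _ (Rabs_Rabsolu _)) (term_bound _ _ _ _ i j Hx Hy))), H1.
  - apply Series_le_gen; auto.
    + intros j. apply term_bound; auto.
    + apply (ex_series_leR _ _ (fun j => Rle_trans _ _ _ (Req_le _ _ (Rabs_Rabsolu _)) (term_bound _ _ _ _ i j Hx Hy))), H1.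
Qed.

Lemma AS_mono (a : arr) (r r' : R) : 0 <= r' <= r -> AS a r -> AS a r'.
Proof.
  intros Hr [H1 H2].
  assert (Hle : forall i j, Rabs (Rabs (a i j) * r' ^ (i + j)) <= Rabs (a i j) * r ^ (i + j)).
  { intros i j. rewrite Rabs_mult, Rabs_Rabsolu. apply Rmult_le_compat_l. apply Rabs_pos.
    apply pow_abs_le. rewrite Rabs_pos_eq; lra. }
  assert (Hin : forall i, ex_series (fun j => Rabs (a i j) * r' ^ (i + j))).
  { intros i. apply (ex_series_leR _ _ (Hle i)), H1. }
  split; auto.
  apply (ex_series_leR _ (fun i => Series (fun j => Rabs (a i j) * r ^ (i + j)))); [|exact H2].
  intros i. rewrite Rabs_pos_eq.
  - apply Series_le_gen; auto. intros j. specialize (Hle i j). rewrite Rabs_pos_eq in Hle; auto.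
    apply Rmult_le_pos. apply Rabs_pos. apply pow_le; lra.
  - apply Series_nonneg; auto. intros j. apply Rmult_le_pos. apply Rabs_pos. apply pow_le; lra.
Qed.

Lemma ex_series_extR (a b : nat -> R) : (forall n, a n = b n) -> ex_series a -> ex_series b.
Proof. intros H Ha. exact (ex_series_ext a b H Ha). Qed.
Lemma is_series_extR (a b : nat -> R) l : (forall n, a n = b n) -> is_series a l -> is_series b l.
Proof. intros H Ha. exact (is_series_ext a b l H Ha). Qed.

Lemma sum_le_Series (u : nat -> R) n : (forall k, 0 <= u k) -> ex_series u -> sum_f_R0 u n <= Series u.
Proof.
  intros H Hu. apply Series_correct, is_series_Reals in Hu. apply sum_incr; auto.
Qed.

Lemma term_le_Series (u : nat -> R) n : (forall k, 0 <= u k) -> ex_series u -> u n <= Series u.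
Proof.
  intros H Hu. eapply Rle_trans; [|apply (sum_le_Series u n H Hu)].
  destruct n; simpl; [lra|]. pose proof (cond_pos_sum u n H). lra.
Qed.

Lemma is_series_sum_f (u : nat -> nat -> R) (l : nat -> R) (N : nat) :
  (forall k, (k <= N)%nat -> is_series (u k) (l k)) ->
  is_series (fun j => sum_f_R0 (fun k => u k j) N) (sum_f_R0 l N).
Proof.
  induction N; intros H; simpl.
  - apply H; lia.
  - apply is_series_plusR; [apply IHN; intros; apply H; lia| apply H; lia].
Qed.

Lemma CV_radius_ge (a : nat -> R) (r M : R) : (forall n, Rabs (a n * r ^ n) <= M) -> Rbar_le r (CV_radius a).
Proof.
  intros H. destruct (CV_radius_bounded a) as [Hub _]. apply Hub. exists M; auto.
Qed.

Lemma is_pseries_R (a : nat -> R) x l : is_pseries a x l <-> is_series (fun n => a n * x ^ n) l.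
Proof.
  unfold is_pseries. 
  assert (E : forall n, scal (pow_n x n) (a n) = a n * x ^ n).
  { intros n. rewrite pow_n_pow. unfold scal; simpl. unfold mult; simpl. ring. }
  split; intros H; refine (is_series_ext _ _ _ _ H); intros n; rewrite E; reflexivity.
Qed.

Section Row.
Variables (a : arr) (r : R).
Hypothesis Ha : AS a r.
Hypothesis Hr : 0 < r.

Lemma row_abs_ex i : ex_series (fun j => Rabs (a i j) * r ^ j).
Proof.
  destruct Ha as [H1 _]. 
  apply (ex_series_extR (fun j => / r ^ i * (Rabs (a i j) * r ^ (i + j)))).
  - intros j. rewrite pow_add. field. apply pow_nonzero. lra.
  - apply ex_series_scalR, H1.
Qed.

Lemma row_ex i y : Rabs y <= r -> ex_series (fun j => a i j * y ^ j).
Proof.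
  intros Hy. apply (ex_series_leR _ (fun j => Rabs (a i j) * r ^ j)); [|apply (row_abs_ex i)].
  intros j. rewrite Rabs_mult. apply Rmult_le_compat_l. apply Rabs_pos. now apply pow_abs_le.
Qed.

Lemma row_bound i y : Rabs y <= r ->
  Rabs (Series (fun j => a i j * y ^ j)) * r ^ i <= Series (fun i => Series (fun j => Rabs (a i j) * r ^ (i + j))).
Proof.
  intros Hy. destruct Ha as [H1 H2].
  apply Rle_trans with (Series (fun j => Rabs (a i j) * r ^ (i + j))).
  - apply Rle_trans with (Series (fun j => Rabs (a i j) * r ^ j) * r ^ i).
    + apply Rmult_le_compat_r. apply pow_le; lra.
      eapply Rle_trans. apply Series_Rabs.
      * apply (ex_series_leR _ (fun j => Rabs (a i j) * r ^ j)); [|apply (row_abs_ex i)].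
        intros j. rewrite Rabs_Rabsolu, Rabs_mult. apply Rmult_le_compat_l. apply Rabs_pos. now apply pow_abs_le.
      * apply Series_le_gen. intros j. rewrite Rabs_mult. apply Rmult_le_compat_l. apply Rabs_pos. now apply pow_abs_le.
        apply (ex_series_leR _ (fun j => Rabs (a i j) * r ^ j)); [|apply (row_abs_ex i)].
        intros j. rewrite Rabs_Rabsolu, Rabs_mult. apply Rmult_le_compat_l. apply Rabs_pos. now apply pow_abs_le.
        apply row_abs_ex.
    + rewrite Rmult_comm, <- Series_scal_l. right. apply Series_ext. intros j. rewrite pow_add. ring.
  - apply term_le_Series with (u := fun i => Series (fun j => Rabs (a i j) * r ^ (i + j))); auto.
    intros k. apply Series_nonneg. intros j. apply Rmult_le_pos. apply Rabs_pos. apply pow_le; lra. apply H1.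
Qed.

Lemma row_radius y : Rabs y <= r -> Rbar_le r (CV_radius (fun i => Series (fun j => a i j * y ^ j))).
Proof.
  intros Hy. apply CV_radius_ge with (M := Series (fun i => Series (fun j => Rabs (a i j) * r ^ (i + j)))).
  intros n. rewrite Rabs_mult, (Rabs_pos_eq (r ^ n)) by (apply pow_le; lra). now apply row_bound.
Qed.

Lemma col_radius i : Rbar_le r (CV_radius (a i)).
Proof.
  apply CV_radius_ge with (M := Series (fun j => Rabs (a i j) * r ^ j)).
  intros n. rewrite Rabs_mult, (Rabs_pos_eq (r ^ n)) by (apply pow_le; lra).
  apply (term_le_Series (fun j => Rabs (a i j) * r ^ j)). intros k; apply Rmult_le_pos. apply Rabs_pos. apply pow_le; lra.
  apply row_abs_ex.
Qed.

Lemma DS_row x y : Rabs y <= r ->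
  DS a x y = PSeries (fun i => Series (fun j => a i j * y ^ j)) x.
Proof.
  intros Hy. unfold DS, PSeries. apply Series_ext. intros i.
  rewrite <- Series_scal_r. apply Series_ext. intros j. ring.
Qed.
End Row.

Definition conv (a b : arr) : arr := fun i j =>
  sum_f_R0 (fun k => sum_f_R0 (fun l => a k l * b (i - k)%nat (j - l)%nat) j) i.

Lemma Rbar_lt_le_trans' (x r : R) (c : Rbar) : x < r -> Rbar_le r c -> Rbar_lt x c.
Proof. intros H1 H2. destruct c; simpl in *; auto; lra. Qed.

Lemma DSS_conv (a b : arr) (r x y : R) : AS a r -> AS b r -> Rabs x < r -> Rabs y < r ->
  DSS (conv a b) x y (DS a x y * DS b x y).
Proof.
  intros Ha Hb Hx Hy.
  assert (Hr : 0 < r) by (pose proof (Rabs_pos x); lra).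
  set (A := fun i => Series (fun j => a i j * y ^ j)).
  set (B := fun i => Series (fun j => b i j * y ^ j)).
  assert (HAB : is_pseries (PS_mult A B) x (PSeries A x * PSeries B x)).
  { apply is_pseries_mult.
    - apply is_pseries_R, Series_correct, ex_series_Rabs. apply CV_disk_inside. 
      apply (Rbar_lt_le_trans' _ r); auto. apply row_radius; auto; lra.
    - apply is_pseries_R, Series_correct, ex_series_Rabs. apply CV_disk_inside.
      apply (Rbar_lt_le_trans' _ r); auto. apply row_radius; auto; lra.
    - apply (Rbar_lt_le_trans' _ r); auto. apply row_radius; auto; lra.
    - apply (Rbar_lt_le_trans' _ r); auto. apply row_radius; auto; lra. }
  assert (Hcol : forall i, is_series (fun j => conv a b i j * y ^ j) (PS_mult A B i)).
  { intros i. unfold PS_mult, conv.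
    apply (is_series_extR (fun j => sum_f_R0 (fun k => PS_mult (a k) (b (i - k)%nat) j * y ^ j) i)).
    { intros j. unfold PS_mult. rewrite <- scal_sum. ring. }
    apply is_series_sum_f. intros k Hk.
    apply is_pseries_R. apply is_pseries_mult.
    - apply is_pseries_R, Series_correct, (row_ex a r Ha Hr); lra.
    - apply is_pseries_R, Series_correct, (row_ex b r Hb Hr); lra.
    - apply (Rbar_lt_le_trans' _ r); auto. apply col_radius; auto.
    - apply (Rbar_lt_le_trans' _ r); auto. apply col_radius; auto. }
  split.
  - intros i. apply (ex_series_extR (fun j => x ^ i * (conv a b i j * y ^ j))).
    intros j; ring. apply ex_series_scalR. eexists; apply Hcol.
  - rewrite (DS_row a r x y), (DS_row b r x y) by lra.
    apply is_pseries_R in HAB.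
    eapply is_series_ext; [|exact HAB]. intros i. simpl.
    rewrite <- (is_series_unique _ _ (Hcol i)), <- Series_scal_r.
    apply Series_ext. intros j. ring.
Qed.

Definition aabs (a : arr) : arr := fun i j => Rabs (a i j).

Lemma AS_aabs a r : AS a r -> AS (aabs a) r.
Proof.
  intros [H1 H2]. assert (E : forall i j, Rabs (aabs a i j) = Rabs (a i j)) by (intros; apply Rabs_Rabsolu).
  split.
  - intros i. eapply ex_series_extR; [|apply (H1 i)]. intros j. simpl. rewrite E. auto.
  - eapply ex_series_extR; [|apply H2]. intros i. apply Series_ext. intros j. rewrite E. auto.
Qed.

Lemma sum_abs_le (u : nat -> R) n : Rabs (sum_f_R0 u n) <= sum_f_R0 (fun k => Rabs (u k)) n.
Proof. apply sum_f_R0_triangle. Qed.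

Lemma conv_abs_le a b i j : Rabs (conv a b i j) <= conv (aabs a) (aabs b) i j.
Proof.
  unfold conv, aabs. eapply Rle_trans. apply sum_abs_le.
  apply sum_Rle. intros k _. eapply Rle_trans. apply sum_abs_le.
  apply sum_Rle. intros l _. rewrite Rabs_mult. lra.
Qed.

Lemma conv_aabs_nonneg a b i j : 0 <= conv (aabs a) (aabs b) i j.
Proof.
  unfold conv, aabs. apply cond_pos_sum. intros k. apply cond_pos_sum. intros l.
  apply Rmult_le_pos; apply Rabs_pos.
Qed.

Lemma AS_conv a b r r' : AS a r -> AS b r -> 0 <= r' < r -> AS (conv a b) r'.
Proof.
  intros Ha Hb Hr.
  assert (Hr'1 : Rabs r' < r) by (rewrite Rabs_pos_eq; lra).
  destruct (DSS_conv (aabs a) (aabs b) r r' r' (AS_aabs _ _ Ha) (AS_aabs _ _ Hb) Hr'1 Hr'1) as [H1 H2].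
  assert (Hle : forall i j, Rabs (Rabs (conv a b i j) * r' ^ (i + j)) <= conv (aabs a) (aabs b) i j * r' ^ i * r' ^ j).
  { intros i j. rewrite Rabs_mult, Rabs_Rabsolu, (Rabs_pos_eq (r' ^ (i + j))) by (apply pow_le; lra).
    rewrite pow_add, <- Rmult_assoc. apply Rmult_le_compat_r. apply pow_le; lra.
    apply Rmult_le_compat_r. apply pow_le; lra. apply conv_abs_le. }
  split.
  - intros i. apply (ex_series_leR _ _ (Hle i)), H1.
  - apply (ex_series_leR _ (fun i => Series (fun j => conv (aabs a) (aabs b) i j * r' ^ i * r' ^ j))).
    + intros i. rewrite Rabs_pos_eq.
      * apply Series_le_gen. intros j. specialize (Hle i j). rewrite Rabs_pos_eq in Hle; auto.
        apply Rmult_le_pos. apply Rabs_pos. apply pow_le; lra.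
        apply (ex_series_leR _ _ (Hle i)), H1. apply H1.
      * apply Series_nonneg. intros j. apply Rmult_le_pos. apply Rabs_pos. apply pow_le; lra.
        apply (ex_series_leR _ _ (Hle i)), H1.
    + eexists; exact H2.
Qed.

Lemma mid_lt (a b : R) : a < b -> a < (a + b) / 2 < b.
Proof. lra. Qed.

Lemma Rep_conv rho a b F G : Rep rho a F -> Rep rho b G ->
  Rep rho (conv a b) (fun x y => F x y * G x y).
Proof.
  intros [Ha1 Ha2] [Hb1 Hb2]. split.
  - intros r' Hr'. apply (AS_conv a b ((r' + rho) / 2)); try lra;
    [apply Ha1| apply Hb1]; lra.
  - intros x y Hx Hy. set (m := Rmax (Rabs x) (Rabs y)).
    assert (Hm : m < rho) by (unfold m; apply Rmax_lub_lt; auto).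
    assert (Hm0 : 0 <= m) by (unfold m; eapply Rle_trans; [apply Rabs_pos| apply Rmax_l]).
    destruct (DSS_conv a b ((m + rho) / 2) x y) as [_ H2].
    + apply Ha1; lra. + apply Hb1; lra.
    + assert (Rabs x <= m) by apply Rmax_l. lra.
    + assert (Rabs y <= m) by apply Rmax_r. lra.
    + rewrite Ha2, Hb2 by auto. unfold DS at 3. symmetry. now apply is_series_unique.
Qed.

Definition aplus (a b : arr) : arr := fun i j => a i j + b i j.

Lemma Rep_plus rho a b F G : Rep rho a F -> Rep rho b G ->
  Rep rho (aplus a b) (fun x y => F x y + G x y).
Proof.
  intros [Ha1 Ha2] [Hb1 Hb2]. split.
  - intros r Hr. destruct (Ha1 r Hr) as [A1 A2]. destruct (Hb1 r Hr) as [B1 B2].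
    assert (Hle : forall i j, Rabs (Rabs (aplus a b i j) * r ^ (i + j)) <= Rabs (a i j) * r ^ (i + j) + Rabs (b i j) * r ^ (i + j)).
    { intros i j. unfold aplus. rewrite Rabs_mult, Rabs_Rabsolu, (Rabs_pos_eq (r ^ _)) by (apply pow_le; lra).
      rewrite <- Rmult_plus_distr_r. apply Rmult_le_compat_r. apply pow_le; lra. apply Rabs_triang. }
    assert (Hi : forall i, ex_series (fun j => Rabs (aplus a b i j) * r ^ (i + j))).
    { intros i. apply (ex_series_leR _ _ (Hle i)). apply ex_series_plusR; auto. }
    split; auto.
    apply (ex_series_leR _ (fun i => Series (fun j => Rabs (a i j) * r ^ (i + j)) + Series (fun j => Rabs (b i j) * r ^ (i + j)))).
    + intros i. rewrite Rabs_pos_eq.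
      * rewrite <- Series_plus by auto. apply Series_le_gen; auto.
        intros j. specialize (Hle i j). rewrite Rabs_pos_eq in Hle; auto.
        apply Rmult_le_pos. apply Rabs_pos. apply pow_le; lra.
        apply ex_series_plusR; auto.
      * apply Series_nonneg; auto. intros j. apply Rmult_le_pos. apply Rabs_pos. apply pow_le; lra.
    + apply ex_series_plusR; auto.
  - intros x y Hx Hy. rewrite Ha2, Hb2 by auto.
    set (m := Rmax (Rabs x) (Rabs y)).
    assert (Hm : m < rho) by (unfold m; apply Rmax_lub_lt; auto).
    assert (Hm0 : 0 <= m) by (unfold m; eapply Rle_trans; [apply Rabs_pos| apply Rmax_l]).
    assert (Hxm : Rabs x <= m) by apply Rmax_l. assert (Hym : Rabs y <= m) by apply Rmax_r.
    destruct (AS_DSS a m x y (Ha1 m ltac:(lra)) Hxm Hym) as [A1 A2].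
    destruct (AS_DSS b m x y (Hb1 m ltac:(lra)) Hxm Hym) as [B1 B2].
    unfold DS at 3. symmetry. apply is_series_unique.
    eapply is_series_extR; [|apply (is_series_plusR _ _ _ _ A2 B2)].
    intros i. simpl. rewrite <- Series_plus by auto. apply Series_ext. intros j. unfold aplus. ring.
Qed.

Definition dC (c : R) : arr := fun i j => match i, j with O, O => c | _, _ => 0 end.
Definition arrX : arr := fun i j => match i, j with 1%nat, O => 1 | _, _ => 0 end.
Definition arrY : arr := fun i j => match i, j with O, 1%nat => 1 | _, _ => 0 end.

Lemma sum_zero (u : nat -> R) N : (forall n, (n <= N)%nat -> u n = 0) -> sum_f_R0 u N = 0.
Proof. induction N; intros H; simpl. apply H; lia. rewrite IHN. rewrite (H (S N)) by lia. ring. intros; apply H; lia. Qed.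

Lemma Rep_fin rho (a : arr) F N :
  (forall i j, (N < i)%nat \/ (N < j)%nat -> a i j = 0) ->
  (forall x y, Rabs x < rho -> Rabs y < rho ->
     F x y = sum_f_R0 (fun i => sum_f_R0 (fun j => a i j * x ^ i * y ^ j) N) N) ->
  Rep rho a F.
Proof.
  intros Hz HF. split.
  - intros r Hr. 
    assert (Hi : forall i, ex_series (fun j => Rabs (a i j) * r ^ (i + j))).
    { intros i. eexists. apply (is_series_fin _ N). intros n Hn. rewrite Hz by lia. rewrite Rabs_R0; ring. }
    split; auto. eexists. apply (is_series_fin _ N). intros n Hn.
    apply Series_zero. intros j. rewrite Hz by lia. rewrite Rabs_R0; ring.
  - intros x y Hx Hy. rewrite HF by auto. unfold DS. symmetry. apply is_series_unique.
    eapply is_series_extR; [|apply (is_series_fin _ N)].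
    + intros i. simpl. symmetry. apply is_series_unique. apply (is_series_fin _ N).
      intros n Hn. rewrite Hz by lia. ring.
    + intros n Hn. apply sum_zero. intros j _. rewrite Hz by lia. ring.
Qed.

Lemma Rep_dC rho c : Rep rho (dC c) (fun _ _ => c).
Proof.
  apply (Rep_fin _ _ _ 0). intros [|i] [|j] H; simpl; auto; lia.
  intros. simpl. ring.
Qed.
Lemma Rep_dX rho : Rep rho arrX (fun x _ => x).
Proof.
  apply (Rep_fin _ _ _ 1). intros [|[|i]] [|[|j]] H; simpl; auto; lia.
  intros. simpl. ring.
Qed.
Lemma Rep_dY rho : Rep rho arrY (fun _ y => y).
Proof.
  apply (Rep_fin _ _ _ 1). intros [|[|i]] [|[|j]] H; simpl; auto; lia.
  intros. simpl. ring.
Qed.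

Lemma Rep_ext rho a F G : Rep rho a F -> (forall x y, Rabs x < rho -> Rabs y < rho -> F x y = G x y) -> Rep rho a G.
Proof. intros [H1 H2] H. split; auto. intros x y Hx Hy. rewrite <- H; auto. Qed.

Lemma Rep_ext_arr rho a b F : Rep rho a F -> (forall i j, a i j = b i j) -> Rep rho b F.
Proof.
  intros [H1 H2] H. split.
  - intros r Hr. destruct (H1 r Hr) as [A1 A2]. split.
    + intros i. eapply ex_series_extR; [|apply (A1 i)]. intros j. simpl. rewrite H. auto.
    + eapply ex_series_extR; [|apply A2]. intros i. apply Series_ext. intros j. rewrite H. auto.
  - intros x y Hx Hy. rewrite H2 by auto. unfold DS. apply Series_ext. intros i.
    apply Series_ext. intros j. rewrite H. auto.
Qed.

Lemma Rep_analytic0 rho a F : 0 < rho -> Rep rho a F -> analytic0 F.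
Proof.
  intros Hr [H1 H2]. exists (rho / 2). split; [lra|]. exists a.
  destruct (H1 (rho / 2) ltac:(lra)) as [A1 A2]. split; [exact A1|]. split; [exact A2|].
  intros x y [Hx Hy]. rewrite H2 by lra.
  destruct (AS_DSS a (rho / 2) x y (H1 (rho/2) ltac:(lra))) as [_ H]; try lra. exact H.
Qed.

Inductive pex : Type :=
| EC (c : R) | EX | EY | EV
| EL (a : arr) (F : R -> R -> R) (M : R)
| EAdd (e1 e2 : pex) | EMul (e1 e2 : pex).

Fixpoint evalf (e : pex) (x y v : R) : R :=
  match e with
  | EC c => c | EX => x | EY => y | EV => v | EL _ F _ => F x y
  | EAdd e1 e2 => evalf e1 x y v + evalf e2 x y v
  | EMul e1 e2 => evalf e1 x y v * evalf e2 x y v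
  end.

Fixpoint evala (e : pex) (a : arr) : arr :=
  match e with
  | EC c => dC c | EX => arrX | EY => arrY | EV => a | EL b _ _ => b
  | EAdd e1 e2 => aplus (evala e1 a) (evala e2 a)
  | EMul e1 e2 => conv (evala e1 a) (evala e2 a)
  end.

Fixpoint leaves_rep (rho : R) (e : pex) : Prop :=
  match e with
  | EL b F _ => Rep rho b F
  | EAdd e1 e2 | EMul e1 e2 => leaves_rep rho e1 /\ leaves_rep rho e2
  | _ => True
  end.

Lemma Rep_eval rho e a F : Rep rho a F -> leaves_rep rho e ->
  Rep rho (evala e a) (fun x y => evalf e x y (F x y)).
Proof.
  intros Ha. induction e; simpl; intros Hl.
  - apply Rep_dC. - apply Rep_dX. - apply Rep_dY. - exact Ha. - exact Hl.
  - destruct Hl. apply Rep_plus; auto.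
  - destruct Hl. apply Rep_conv; auto.
Qed.

Definition lowzero (m : nat) (a : arr) : Prop := forall i j, (i + j < m)%nat -> a i j = 0.
Definition agree (n : nat) (a b : arr) : Prop := forall i j, (i + j < n)%nat -> a i j = b i j.

Fixpoint ord (e : pex) : nat :=
  match e with
  | EC _ => 0 | EX => 1 | EY => 1 | EV => 1 | EL _ _ _ => 0
  | EAdd e1 e2 => Nat.min (ord e1) (ord e2)
  | EMul e1 e2 => ord e1 + ord e2
  end.

Lemma conv_low m1 m2 a b : lowzero m1 a -> lowzero m2 b -> lowzero (m1 + m2) (conv a b).
Proof.
  intros Ha Hb i j Hij. unfold conv. apply sum_zero. intros k Hk. apply sum_zero. intros l Hl.
  destruct (Compare_dec.lt_dec (k + l) m1) as [H|H].
  - rewrite Ha by lia. ring.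
  - rewrite (Hb (i - k)%nat (j - l)%nat) by lia. ring.
Qed.

Lemma ord_ok e a : lowzero 1 a -> lowzero (ord e) (evala e a).
Proof.
  intros Ha. induction e; simpl; intros i j Hij.
  - lia.
  - destruct i as [|[|i]]; destruct j; simpl; auto; lia.
  - destruct i as [|i]; destruct j as [|[|j]]; simpl; auto; lia.
  - apply Ha; lia.
  - lia.
  - unfold aplus. rewrite IHe1, IHe2 by lia. ring.
  - apply (conv_low (ord e1) (ord e2)); auto.
Qed.

Definition omin (a b : option nat) : option nat :=
  match a, b with
  | None, _ => b | _, None => a
  | Some x, Some y => Some (Nat.min x y)
  end.
Definition oplus (a : option nat) (o : nat) : option nat :=
  match a with None => None | Some d => Some (d + o)%nat end.

Fixpoint gd (e : pex) : option nat :=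
  match e with
  | EV => Some 0%nat
  | EAdd e1 e2 => omin (gd e1) (gd e2)
  | EMul e1 e2 => omin (oplus (gd e1) (ord e2)) (oplus (gd e2) (ord e1))
  | _ => None
  end.

Definition Ag (g : option nat) (n : nat) (a b : arr) : Prop :=
  match g with None => forall i j, a i j = b i j | Some d => agree (n + d) a b end.

Lemma Ag_agree g n a b : Ag g n a b -> forall m, (match g with None => True | Some d => (m <= n + d)%nat end) -> agree m a b.
Proof.
  destruct g; simpl; intros H m Hm i j Hij; apply H; lia.
Qed.

Lemma conv_agree n1 n2 o1 o2 a1 a2 b1 b2 :
  agree n1 a1 a2 -> agree n2 b1 b2 ->
  lowzero o1 a1 -> lowzero o1 a2 -> lowzero o2 b1 -> lowzero o2 b2 ->
  agree (Nat.min (n1 + o2) (n2 + o1)) (conv a1 b1) (conv a2 b2).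
Proof.
  intros Ha Hb La1 La2 Lb1 Lb2 i j Hij. unfold conv. apply sum_eq. intros k Hk. apply sum_eq. intros l Hl.
  destruct (Compare_dec.lt_dec (k + l) n1) as [H1|H1].
  - rewrite (Ha k l H1).
    destruct (Compare_dec.lt_dec ((i - k) + (j - l)) n2) as [H2|H2].
    + rewrite (Hb _ _ H2). reflexivity.
    + rewrite La2 by lia. ring.
  - rewrite (Lb1 (i - k)%nat (j - l)%nat), (Lb2 (i - k)%nat (j - l)%nat) by lia. ring.
Qed.

Lemma eq_agree m a b : (forall i j, a i j = b i j) -> agree m a b.
Proof. intros H i j _. apply H. Qed.

Lemma gd_ok e n a b : lowzero 1 a -> lowzero 1 b -> agree n a b -> Ag (gd e) n (evala e a) (evala e b).
Proof.
  intros La Lb H. induction e; simpl; unfold Ag in *; auto.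
  - intros i j Hij. apply H. lia.
  - destruct (gd e1) as [d1|], (gd e2) as [d2|]; simpl in *; unfold aplus.
    + intros i j Hij. rewrite IHe1, IHe2 by lia. auto.
    + intros i j Hij. rewrite IHe1, IHe2 by lia. auto.
    + intros i j Hij. rewrite IHe1, IHe2 by lia. auto.
    + intros i j. rewrite IHe1, IHe2. auto.
  - pose proof (ord_ok e1 a La) as L1a. pose proof (ord_ok e1 b Lb) as L1b.
    pose proof (ord_ok e2 a La) as L2a. pose proof (ord_ok e2 b Lb) as L2b.
    destruct (gd e1) as [d1|], (gd e2) as [d2|]; simpl in *.
    + intros i j Hij.
      apply (conv_agree (n + d1) (n + d2) (ord e1) (ord e2)); auto. lia.
    + intros i j Hij.
      apply (conv_agree (n + d1) (n + d1 + ord e2 + ord e1) (ord e1) (ord e2)); auto.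
      apply eq_agree; auto. lia.
    + intros i j Hij.
      apply (conv_agree (n + d2 + ord e1 + ord e2) (n + d2) (ord e1) (ord e2)); auto.
      apply eq_agree; auto. lia.
    + intros i j. unfold conv. apply sum_eq. intros k _. apply sum_eq. intros l _.
      rewrite IHe1, IHe2. auto.
Qed.

Definition goodT (T : pex) : Prop :=
  (1 <= ord T)%nat /\ match gd T with None => True | Some d => (1 <= d)%nat end.

Fixpoint it (T : pex) (n : nat) : arr :=
  match n with O => (fun _ _ => 0) | S n => evala T (it T n) end.

Definition fixc (T : pex) : arr := fun i j => it T (S (i + j)) i j.

Section Fix.
Variable T : pex.
Hypothesis HT : goodT T.

Lemma it_low n : lowzero 1 (it T n).
Proof.
  destruct n; simpl. intros i j _; auto.
  intros i j Hij. apply (ord_ok T (it T n)). 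
  - clear i j Hij. induction n; simpl. intros i j _; auto.
    intros i j Hij. apply (ord_ok T (it T n)); auto. destruct HT; lia.
  - destruct HT; lia.
Qed.

Lemma it_agree n : agree n (it T n) (it T (S n)).
Proof.
  induction n.
  - intros i j H; lia.
  - simpl. pose proof (gd_ok T n (it T n) (it T (S n)) (it_low n) (it_low (S n)) IHn) as H.
    destruct HT as [_ Hd]. simpl in H. apply (Ag_agree _ _ _ _ H). destruct (gd T); lia.
Qed.

Lemma agree_trans n a b c : agree n a b -> agree n b c -> agree n a c.
Proof. intros H1 H2 i j H. rewrite H1, H2; auto. Qed.
Lemma agree_mono n m a b : (m <= n)%nat -> agree n a b -> agree m a b.
Proof. intros Hm H i j Hij. apply H. lia. Qed.

Lemma it_agree2 n m : (n <= m)%nat -> agree n (it T n) (it T m).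
Proof.
  intros H. induction H.
  - intros i j _; auto.
  - eapply agree_trans. exact IHle. apply (agree_mono m). auto. apply it_agree.
Qed.

Lemma fixc_agree n : agree n (fixc T) (it T n).
Proof.
  intros i j Hij. unfold fixc. apply it_agree2; lia.
Qed.

Lemma fixc_low : lowzero 1 (fixc T).
Proof. intros i j Hij. unfold fixc. apply it_low. auto. Qed.

Lemma fixc_fix i j : evala T (fixc T) i j = fixc T i j.
Proof.
  unfold fixc at 2. simpl.
  pose proof (gd_ok T (i + j) (fixc T) (it T (i + j)) fixc_low (it_low _) (fixc_agree _)) as H.
  destruct HT as [_ Hd]. apply (Ag_agree _ _ _ _ H (S (i + j))). destruct (gd T); lia. lia.
Qed.
End Fix.

Definition fs (K : nat) (a : arr) : Prop := forall i j, (K < i)%nat \/ (K < j)%nat -> a i j = 0.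
Definition fsum (K : nat) (a : arr) (x y : R) : R :=
  sum_f_R0 (fun i => sum_f_R0 (fun j => a i j * x ^ i * y ^ j) K) K.

Lemma fs_Rep K a rho : fs K a -> Rep rho a (fsum K a).
Proof. intros H. apply (Rep_fin _ _ _ K); auto. Qed.

Lemma fs_DS K a x y : fs K a -> DS a x y = fsum K a x y.
Proof.
  intros H. destruct (fs_Rep K a (Rabs x + Rabs y + 1) H) as [_ H2].
  symmetry. apply H2; pose proof (Rabs_pos x); pose proof (Rabs_pos y); lra.
Qed.

Lemma fs_AS K a r : fs K a -> 0 <= r -> AS a r.
Proof. intros H Hr. destruct (fs_Rep K a (r + 1) H) as [H1 _]. apply H1. lra. Qed.

Lemma fs_mono K K' a : (K <= K')%nat -> fs K a -> fs K' a.
Proof. intros HK H i j Hij. apply H. lia. Qed.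

Lemma sum_le_sum (u v : nat -> R) N : (forall n, (n <= N)%nat -> u n <= v n) -> sum_f_R0 u N <= sum_f_R0 v N.
Proof. intros H. apply sum_Rle. auto. Qed.

Lemma fsum_mono K a b x y : 0 <= x -> 0 <= y -> (forall i j, a i j <= b i j) -> fsum K a x y <= fsum K b x y.
Proof.
  intros Hx Hy H. unfold fsum. apply sum_le_sum. intros i _. apply sum_le_sum. intros j _.
  apply Rmult_le_compat_r. apply pow_le; lra. apply Rmult_le_compat_r. apply pow_le; lra. auto.
Qed.

Lemma fsum_nonneg K a x y : 0 <= x -> 0 <= y -> (forall i j, 0 <= a i j) -> 0 <= fsum K a x y.
Proof.
  intros Hx Hy H. unfold fsum. apply cond_pos_sum. intros i. apply cond_pos_sum. intros j.
  apply Rmult_le_pos. apply Rmult_le_pos; auto. apply pow_le; lra. apply pow_le; lra.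
Qed.

Lemma fsum_plus K a b x y : fsum K (aplus a b) x y = fsum K a x y + fsum K b x y.
Proof.
  unfold fsum, aplus. rewrite <- sum_plus. apply sum_eq. intros i _.
  rewrite <- sum_plus. apply sum_eq. intros j _. ring.
Qed.

Definition trunc (N : nat) (a : arr) : arr := fun i j => if (i + j <=? N)%nat then a i j else 0.
Definition tn (r : R) (N : nat) (a : arr) : R := DS (aabs (trunc N a)) r r.

Lemma fs_trunc N a : fs N (aabs (trunc N a)).
Proof.
  intros i j H. unfold aabs, trunc. destruct (Nat.leb_spec (i + j) N); [lia|]. apply Rabs_R0.
Qed.

Lemma tn_fsum r N a : tn r N a = fsum N (aabs (trunc N a)) r r.
Proof. apply fs_DS, fs_trunc. Qed.

Lemma tn_nonneg r N a : 0 <= r -> 0 <= tn r N a.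
Proof. intros Hr. rewrite tn_fsum. apply fsum_nonneg; auto. intros; unfold aabs; apply Rabs_pos. Qed.

Lemma tn_plus r N a b : 0 <= r -> tn r N (aplus a b) <= tn r N a + tn r N b.
Proof.
  intros Hr. rewrite !tn_fsum, <- fsum_plus. apply fsum_mono; auto.
  intros i j. unfold aabs, trunc, aplus. destruct (i + j <=? N)%nat.
  apply Rabs_triang. rewrite Rabs_R0. lra.
Qed.

Lemma conv_fs K a b : fs K a -> fs K b -> fs (K + K) (conv a b).
Proof.
  intros Ha Hb i j Hij. unfold conv. apply sum_zero. intros k Hk. apply sum_zero. intros l Hl.
  destruct (Compare_dec.le_dec k K), (Compare_dec.le_dec l K).
  - rewrite (Hb (i - k)%nat (j - l)%nat) by lia. ring.
  - rewrite Ha by lia. ring.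
  - rewrite Ha by lia. ring.
  - rewrite Ha by lia. ring.
Qed.

Lemma tn_conv r N a b : 0 <= r -> tn r N (conv a b) <= tn r N a * tn r N b.
Proof.
  intros Hr. unfold tn.
  set (A := aabs (trunc N a)). set (B := aabs (trunc N b)).
  assert (HA : fs N A) by apply fs_trunc. assert (HB : fs N B) by apply fs_trunc.
  assert (E : DS (conv A B) r r = DS A r r * DS B r r).
  { assert (Hr1 : 0 <= r + 1) by lra. assert (Hr2 : Rabs r < r + 1) by (rewrite Rabs_pos_eq; lra).
    destruct (DSS_conv A B (r + 1) r r (fs_AS N A _ HA Hr1) (fs_AS N B _ HB Hr1) Hr2 Hr2) as [_ H].
    apply is_series_unique in H. exact H. }
  rewrite <- E. rewrite (fs_DS (N + N) _ r r), (fs_DS (N + N) (conv A B) r r).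
  - apply fsum_mono; auto. intros i j. unfold A, B, aabs, trunc at 1.
    destruct (Nat.leb_spec (i + j) N).
    + eapply Rle_trans. apply conv_abs_le. unfold conv, aabs. apply sum_le_sum. intros k Hk.
      apply sum_le_sum. intros l Hl. unfold trunc.
      destruct (Nat.leb_spec (k + l) N); [|lia]. destruct (Nat.leb_spec (i - k + (j - l)) N); [|lia]. lra.
    + rewrite Rabs_R0. apply conv_aabs_nonneg.
  - apply conv_fs; auto.
  - apply (fs_mono N); [lia|]. apply fs_trunc.
Qed.

Lemma DS_ext a b x y : (forall i j, a i j = b i j) -> DS a x y = DS b x y.
Proof. intros H. unfold DS. apply Series_ext. intros i. apply Series_ext. intros j. rewrite H. auto. Qed.

Lemma fsum_K K K' a x y : (K <= K')%nat -> fs K a -> fsum K a x y = fsum K' a x y.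
Proof. intros H Ha. rewrite <- !fs_DS with (a := a); auto. apply (fs_mono K); auto. Qed.

Lemma tn_le_DS r N K a : 0 <= r -> fs K a -> tn r N a <= DS (aabs a) r r.
Proof.
  intros Hr Ha. assert (HaK : fs K (aabs a)) by (intros i j H; unfold aabs; rewrite Ha; auto; apply Rabs_R0).
  rewrite tn_fsum, (fsum_K N (N + K)), (fs_DS (N + K)) by (auto; try lia; try apply fs_trunc; apply (fs_mono K); auto; lia).
  apply fsum_mono; auto. intros i j. unfold aabs, trunc. destruct (i + j <=? N)%nat. lra.
  rewrite Rabs_R0. apply Rabs_pos.
Qed.

Lemma tn_dC r N c : 0 <= r -> tn r N (dC c) <= Rabs c.
Proof.
  intros Hr. eapply Rle_trans. apply (tn_le_DS r N 0); auto.
  { intros [|i] [|j] H; simpl; auto; lia. }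
  rewrite (DS_ext _ (dC (Rabs c))). 2:{ intros [|i] [|j]; unfold aabs; simpl; auto; apply Rabs_R0. }
  destruct (Rep_dC (r + 1) (Rabs c)) as [_ H]. rewrite <- H by (rewrite Rabs_pos_eq; lra). lra.
Qed.

Lemma tn_dX r N : 0 <= r -> tn r N arrX <= r.
Proof.
  intros Hr. eapply Rle_trans. apply (tn_le_DS r N 1); auto.
  { intros [|[|i]] [|[|j]] H; simpl; auto; lia. }
  rewrite (DS_ext _ arrX). 2:{ intros [|[|i]] [|[|j]]; unfold aabs; simpl; try apply Rabs_R0; apply Rabs_R1. }
  destruct (Rep_dX (r + 1)) as [_ H]. rewrite <- H by (rewrite Rabs_pos_eq; lra). lra.
Qed.

Lemma tn_dY r N : 0 <= r -> tn r N arrY <= r.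
Proof.
  intros Hr. eapply Rle_trans. apply (tn_le_DS r N 1); auto.
  { intros [|[|i]] [|[|j]] H; simpl; auto; lia. }
  rewrite (DS_ext _ arrY). 2:{ intros [|[|i]] [|[|j]]; unfold aabs; simpl; try apply Rabs_R0; apply Rabs_R1. }
  destruct (Rep_dY (r + 1)) as [_ H]. rewrite <- H by (rewrite Rabs_pos_eq; lra). lra.
Qed.

Fixpoint absE (e : pex) : pex :=
  match e with
  | EC c => EC (Rabs c) | EL _ _ M => EC M
  | EAdd e1 e2 => EAdd (absE e1) (absE e2)
  | EMul e1 e2 => EMul (absE e1) (absE e2)
  | e => e
  end.

Fixpoint leaves_bd (r : R) (e : pex) : Prop :=
  match e with
  | EL a _ M => forall N, tn r N a <= M
  | EAdd e1 e2 | EMul e1 e2 => leaves_bd r e1 /\ leaves_bd r e2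
  | _ => True
  end.

Lemma absE_nonneg r e v : 0 <= r -> 0 <= v -> leaves_bd r e -> 0 <= evalf (absE e) r r v.
Proof.
  intros Hr Hv. induction e; simpl; intros Hl; auto.
  - apply Rabs_pos.
  - eapply Rle_trans; [apply (tn_nonneg r 0 a Hr)| apply Hl].
  - destruct Hl. apply Rplus_le_le_0_compat; auto.
  - destruct Hl. apply Rmult_le_pos; auto.
Qed.

Lemma absE_mono r e v v' : 0 <= r -> 0 <= v <= v' -> leaves_bd r e ->
  evalf (absE e) r r v <= evalf (absE e) r r v'.
Proof.
  intros Hr Hv. induction e; simpl; intros Hl; try lra.
  - destruct Hl. specialize (IHe1 H). specialize (IHe2 H0). lra.
  - destruct Hl as [H1 H2]. apply Rmult_le_compat; auto; apply absE_nonneg; auto; lra.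
Qed.

Lemma tn_eval r N e a : 0 <= r -> leaves_bd r e ->
  tn r N (evala e a) <= evalf (absE e) r r (tn r N a).
Proof.
  intros Hr. induction e; simpl; intros Hl.
  - apply tn_dC; auto.
  - apply tn_dX; auto.
  - apply tn_dY; auto.
  - lra.
  - apply Hl.
  - destruct Hl. eapply Rle_trans. apply tn_plus; auto. specialize (IHe1 H). specialize (IHe2 H0). lra.
  - destruct Hl as [H1 H2]. eapply Rle_trans. apply tn_conv; auto.
    apply Rmult_le_compat; auto; apply tn_nonneg; auto.
Qed.

Lemma tn_it T r tau N n : 0 <= r -> 0 <= tau -> leaves_bd r T -> evalf (absE T) r r tau <= tau ->
  tn r N (it T n) <= tau.
Proof.
  intros Hr Ht Hl Hb. induction n; simpl.
  - rewrite tn_fsum. unfold fsum, aabs, trunc.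
    rewrite sum_zero; [lra|]. intros i _. apply sum_zero. intros j _.
    destruct (i + j <=? N)%nat; rewrite Rabs_R0; ring.
  - eapply Rle_trans. apply tn_eval; auto. eapply Rle_trans; [|exact Hb].
    apply absE_mono; auto. split; auto. apply tn_nonneg; auto.
Qed.

Lemma tn_agree r N a b : agree (S N) a b -> tn r N a = tn r N b.
Proof.
  intros H. unfold tn. apply DS_ext. intros i j. unfold aabs, trunc.
  destruct (Nat.leb_spec (i + j) N); auto. rewrite H by lia. auto.
Qed.

Lemma sum_ge_term (u : nat -> R) n K : (forall k, 0 <= u k) -> (n <= K)%nat -> u n <= sum_f_R0 u K.
Proof.
  intros H Hn. induction Hn.
  - destruct n; simpl; [lra|]. pose proof (cond_pos_sum u n H). lra.
  - simpl. specialize (H (S m)). lra.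
Qed.

Lemma sum_mono_N (u : nat -> R) n K : (forall k, 0 <= u k) -> (n <= K)%nat -> sum_f_R0 u n <= sum_f_R0 u K.
Proof.
  intros H Hn. induction Hn; [lra|]. simpl. specialize (H (S m)). lra.
Qed.

Lemma rect_le_tn r c I J : 0 <= r ->
  sum_f_R0 (fun i => sum_f_R0 (fun j => Rabs (c i j) * r ^ (i + j)) J) I <= tn r (I + J) c.
Proof.
  intros Hr. rewrite tn_fsum. unfold fsum.
  apply Rle_trans with (sum_f_R0 (fun i => sum_f_R0 (fun j => aabs (trunc (I + J) c) i j * r ^ i * r ^ j) (I + J)) I).
  - apply sum_le_sum. intros i Hi.
    apply Rle_trans with (sum_f_R0 (fun j => aabs (trunc (I + J) c) i j * r ^ i * r ^ j) J).
    + apply sum_le_sum. intros j Hj. unfold aabs, trunc. destruct (Nat.leb_spec (i + j) (I + J)); [|lia].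
      rewrite pow_add. lra.
    + apply sum_mono_N; [|lia]. intros k. unfold aabs. apply Rmult_le_pos. apply Rmult_le_pos. apply Rabs_pos.
      apply pow_le; lra. apply pow_le; lra.
  - apply sum_mono_N; [|lia]. intros k. apply cond_pos_sum. intros l. unfold aabs.
    apply Rmult_le_pos. apply Rmult_le_pos. apply Rabs_pos. apply pow_le; lra. apply pow_le; lra.
Qed.

Lemma ex_series_bounded (u : nat -> R) M : (forall n, 0 <= u n) -> (forall n, sum_f_R0 u n <= M) -> ex_series u.
Proof.
  intros H HM. destruct (growing_cv (sum_f_R0 u)) as [l Hl].
  - intros n. simpl. specialize (H (S n)). lra.
  - exists M. intros x [n ->]. apply HM.
  - exists l. apply is_series_Reals. exact Hl.
Qed.

Lemma Series_le_bound (u : nat -> R) M : (forall n, 0 <= u n) -> (forall n, sum_f_R0 u n <= M) -> Series u <= M.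
Proof.
  intros H HM. pose proof (ex_series_bounded u M H HM) as Hex.
  apply Series_correct, is_series_Reals in Hex.
  apply Rnot_lt_le. intros Hlt.
  destruct (Hex (Series u - M) ltac:(lra)) as [N HN]. specialize (HN N (le_n N)).
  unfold Rdist in HN. specialize (HM N). rewrite Rabs_left1 in HN; lra.
Qed.

Lemma sum_swap (u : nat -> nat -> R) I J :
  sum_f_R0 (fun j => sum_f_R0 (fun i => u i j) I) J = sum_f_R0 (fun i => sum_f_R0 (fun j => u i j) J) I.
Proof.
  induction J; simpl; auto. rewrite IHJ, <- sum_plus. auto.
Qed.

Lemma AS_of_tn c r tau : 0 <= r -> (forall N, tn r N c <= tau) ->
  AS c r /\ Series (fun i => Series (fun j => Rabs (c i j) * r ^ (i + j))) <= tau.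
Proof.
  intros Hr Hb.
  assert (Hnn : forall i j, 0 <= Rabs (c i j) * r ^ (i + j)).
  { intros. apply Rmult_le_pos. apply Rabs_pos. apply pow_le; lra. }
  assert (Hrow : forall i J, sum_f_R0 (fun j => Rabs (c i j) * r ^ (i + j)) J <= tau).
  { intros i J. eapply Rle_trans; [|apply (Hb (i + J)%nat)]. eapply Rle_trans; [|apply rect_le_tn; auto].
    apply (sum_ge_term (fun i0 => sum_f_R0 (fun j => Rabs (c i0 j) * r ^ (i0 + j)) J)); auto.
    intros k. apply cond_pos_sum. auto. }
  assert (H1 : forall i, ex_series (fun j => Rabs (c i j) * r ^ (i + j))).
  { intros i. apply (ex_series_bounded _ tau); auto. }
  assert (Hpart : forall I, sum_f_R0 (fun i => Series (fun j => Rabs (c i j) * r ^ (i + j))) I <= tau).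
  { intros I.
    assert (Hs : is_series (fun j => sum_f_R0 (fun i => Rabs (c i j) * r ^ (i + j)) I)
                  (sum_f_R0 (fun i => Series (fun j => Rabs (c i j) * r ^ (i + j))) I)).
    { apply is_series_sum_f. intros k _. apply Series_correct. auto. }
    rewrite <- (is_series_unique _ _ Hs). apply Series_le_bound.
    - intros n. apply cond_pos_sum. auto.
    - intros J. rewrite sum_swap. eapply Rle_trans; [apply rect_le_tn; auto| apply Hb]. }
  assert (H2 : ex_series (fun i => Series (fun j => Rabs (c i j) * r ^ (i + j)))).
  { apply (ex_series_bounded _ tau); auto. intros n. apply Series_nonneg; auto. }
  split; [split; auto|]. apply Series_le_bound; auto. intros n. apply Series_nonneg; auto.
Qed.

Lemma DS_abs_le a r x y : AS a r -> Rabs x <= r -> Rabs y <= r ->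
  Rabs (DS a x y) <= Series (fun i => Series (fun j => Rabs (a i j) * r ^ (i + j))).
Proof.
  intros [H1 H2] Hx Hy.
  assert (Hin : forall i, ex_series (fun j => Rabs (a i j * x ^ i * y ^ j))).
  { intros i. apply (ex_series_leR _ (fun j => Rabs (a i j) * r ^ (i + j))); auto.
    intros j. rewrite Rabs_Rabsolu. apply term_bound; auto. }
  assert (Hrow : forall i, Rabs (Series (fun j => a i j * x ^ i * y ^ j)) <= Series (fun j => Rabs (a i j) * r ^ (i + j))).
  { intros i. eapply Rle_trans. apply Series_Rabs; auto. apply Series_le_gen; auto.
    intros j; apply term_bound; auto. }
  unfold DS. eapply Rle_trans. apply Series_Rabs.
  - apply (ex_series_leR _ _ (fun i => Rle_trans _ _ _ (Req_le _ _ (Rabs_Rabsolu _)) (Hrow i))); auto.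
  - apply Series_le_gen; auto.
    apply (ex_series_leR _ _ (fun i => Rle_trans _ _ _ (Req_le _ _ (Rabs_Rabsolu _)) (Hrow i))); auto.
Qed.

Theorem fixpoint (T : pex) (rho tau : R) :
  0 < rho -> 0 <= tau -> goodT T -> leaves_rep rho T -> leaves_bd rho T ->
  evalf (absE T) rho rho tau <= tau ->
  Rep rho (fixc T) (DS (fixc T)) /\
  (forall x y, Rabs x < rho -> Rabs y < rho -> DS (fixc T) x y = evalf T x y (DS (fixc T) x y)) /\
  (forall x y, Rabs x <= rho -> Rabs y <= rho -> Rabs (DS (fixc T) x y) <= tau).
Proof.
  intros Hr Ht HT Hl Hlb Hb.
  assert (Htn : forall N, tn rho N (fixc T) <= tau).
  { intros N. rewrite (tn_agree rho N (fixc T) (it T (S N))) by apply fixc_agree, HT.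
    apply tn_it; auto; lra. }
  destruct (AS_of_tn (fixc T) rho tau ltac:(lra) Htn) as [HAS Hsum].
  assert (HR : Rep rho (fixc T) (DS (fixc T))).
  { split; auto. intros r Hr'. apply (AS_mono _ rho); auto; lra. }
  split; auto. split.
  - intros x y Hx Hy.
    pose proof (Rep_eval rho T (fixc T) (DS (fixc T)) HR Hl) as H.
    apply (Rep_ext_arr _ _ (fixc T)) in H; [|apply fixc_fix, HT].
    destruct H as [_ H]. rewrite H; auto.
  - intros x y Hx Hy. eapply Rle_trans; [apply (DS_abs_le _ rho)|]; auto.
Qed.

Section Fubini.
Variable u : nat -> nat -> R.
Hypothesis Hrow : forall i, ex_series (fun j => Rabs (u i j)).
Hypothesis Hsum : ex_series (fun i => Series (fun j => Rabs (u i j))).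

Let R_ i := Series (fun j => Rabs (u i j)).
Let T := Series R_.
Let W j := Series (fun i => Rabs (u i j)).

Lemma Rrow_nonneg i : 0 <= R_ i.
Proof. apply Series_nonneg; auto. intros; apply Rabs_pos. Qed.

Lemma col_abs_ex j : ex_series (fun i => Rabs (u i j)).
Proof.
  apply (ex_series_leR _ R_); auto. intros i. rewrite Rabs_Rabsolu.
  apply (term_le_Series (fun j => Rabs (u i j))); auto. intros; apply Rabs_pos.
Qed.

Lemma col_ex j : ex_series (fun i => u i j).
Proof. apply ex_series_Rabs, col_abs_ex. Qed.

Lemma partW J : is_series (fun i => sum_f_R0 (fun j => Rabs (u i j)) J) (sum_f_R0 W J).
Proof. apply is_series_sum_f. intros k _. apply Series_correct, col_abs_ex. Qed.

Lemma partW_le J : sum_f_R0 W J <= T.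
Proof.
  rewrite <- (is_series_unique _ _ (partW J)). apply Series_le_gen.
  - intros i. apply sum_le_Series; auto. intros; apply Rabs_pos.
  - eexists; apply partW.
  - exact Hsum.
Qed.

Lemma W_nonneg j : 0 <= W j.
Proof. apply Series_nonneg. intros; apply Rabs_pos. apply col_abs_ex. Qed.

Lemma W_ex : ex_series W.
Proof. apply (ex_series_bounded _ T). apply W_nonneg. apply partW_le. Qed.

Lemma W_sum : Series W = T.
Proof.
  apply Rle_antisym.
  - apply Series_le_bound. apply W_nonneg. apply partW_le.
  - apply Series_le_bound. apply Rrow_nonneg. intros I.
    assert (Hs : is_series (fun j => sum_f_R0 (fun i => Rabs (u i j)) I) (sum_f_R0 R_ I)).
    { apply is_series_sum_f. intros k _. apply Series_correct; auto. }
    rewrite <- (is_series_unique _ _ Hs). apply Series_le_bound.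
    + intros n; apply cond_pos_sum; intros; apply Rabs_pos.
    + intros J. apply Rle_trans with (sum_f_R0 W J).
      * apply sum_le_sum. intros j _. apply sum_le_Series. intros; apply Rabs_pos. apply col_abs_ex.
      * apply sum_le_Series. apply W_nonneg. apply W_ex.
Qed.

Lemma tail_bound (a : nat -> R) J : ex_series (fun j => Rabs (a j)) ->
  Rabs (Series a - sum_f_R0 a J) <= Series (fun j => Rabs (a j)) - sum_f_R0 (fun j => Rabs (a j)) J.
Proof.
  intros Ha. pose proof (ex_series_Rabs _ Ha) as Ha'.
  rewrite (Series_incr_n a (S J)), (Series_incr_n (fun j => Rabs (a j)) (S J)) by (auto; lia). simpl pred.
  replace (sum_f_R0 a J + Series (fun k => a (S J + k)%nat) - sum_f_R0 a J) with (Series (fun k => a (S J + k)%nat)) by ring.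
  replace (sum_f_R0 (fun j => Rabs (a j)) J + Series (fun k => Rabs (a (S J + k)%nat)) - sum_f_R0 (fun j => Rabs (a j)) J)
    with (Series (fun k => Rabs (a (S J + k)%nat))) by ring.
  apply Series_Rabs. apply (ex_series_incr_n (fun j => Rabs (a j)) (S J)). auto.
Qed.

Theorem fubini : is_series (fun j => Series (fun i => u i j)) (Series (fun i => Series (fun j => u i j))).
Proof.
  apply is_series_Reals. intros eps He.
  pose proof W_ex as HW. apply Series_correct, is_series_Reals in HW. rewrite W_sum in HW.
  destruct (HW eps He) as [N HN]. exists N. intros J HJ. specialize (HN J HJ).
  pose proof (partW_le J) as HP.
  assert (Hpart : is_series (fun i => sum_f_R0 (fun j => u i j) J) (sum_f_R0 (fun j => Series (fun i => u i j)) J)).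
  { apply is_series_sum_f. intros k _. apply Series_correct, col_ex. }
  assert (Hrow' : forall i, ex_series (fun j => u i j)) by (intros; apply ex_series_Rabs; auto).
  assert (Hex1 : ex_series (fun i => Series (fun j => u i j))).
  { apply (ex_series_leR _ R_); auto. intros i. apply Series_Rabs; auto. }
  unfold Rdist. rewrite <- (is_series_unique _ _ Hpart), <- Series_minus; try (eexists; exact Hpart); auto.
  eapply Rle_lt_trans. apply Series_Rabs.
  - apply (ex_series_leR _ (fun i => R_ i - sum_f_R0 (fun j => Rabs (u i j)) J)).
    + intros i; simpl; rewrite ?Rabs_Rabsolu; unfold R_; rewrite Rabs_minus_sym; apply (tail_bound (fun j => u i j)); auto.
    + apply (ex_series_extR (fun i => R_ i + (-1) * sum_f_R0 (fun j => Rabs (u i j)) J)). intros; unfold R_; ring.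
      apply ex_series_plusR; auto. apply ex_series_scalR. eexists; apply partW.
  - eapply Rle_lt_trans. apply Series_le_gen.
    + intros i; simpl; unfold R_; rewrite Rabs_minus_sym; apply (tail_bound (fun j => u i j)); auto.
    + apply (ex_series_leR _ (fun i => R_ i - sum_f_R0 (fun j => Rabs (u i j)) J)).
      * intros i; simpl; rewrite ?Rabs_Rabsolu; unfold R_; rewrite Rabs_minus_sym; apply (tail_bound (fun j => u i j)); auto.
      * apply (ex_series_extR (fun i => R_ i + (-1) * sum_f_R0 (fun j => Rabs (u i j)) J)). intros; unfold R_; ring.
        apply ex_series_plusR; auto. apply ex_series_scalR. eexists; apply partW.
    + apply (ex_series_extR (fun i => R_ i + (-1) * sum_f_R0 (fun j => Rabs (u i j)) J)). intros; unfold R_; ring.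
      apply ex_series_plusR; auto. apply ex_series_scalR. eexists; apply partW.
    + rewrite Series_minus; auto. 2: eexists; apply partW.
      rewrite (is_series_unique _ _ (partW J)). unfold Rdist in HN.
      assert (HNa : T - sum_f_R0 W J < eps) by (rewrite Rabs_minus_sym, Rabs_pos_eq in HN; lra).
      unfold T, R_ in HNa. lra.
Qed.
End Fubini.

Lemma pick_r rho x y : Rabs x < rho -> Rabs y < rho ->
  exists r, Rabs x < r /\ Rabs y < r /\ r < rho /\ 0 < r.
Proof.
  intros Hx Hy. exists ((Rmax (Rabs x) (Rabs y) + rho) / 2).
  pose proof (Rmax_l (Rabs x) (Rabs y)). pose proof (Rmax_r (Rabs x) (Rabs y)).
  pose proof (Rmax_lub_lt _ _ _ Hx Hy). pose proof (Rabs_pos x). lra.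
Qed.

Lemma loc_int (P : R -> Prop) x r : Rabs x < r -> (forall s, Rabs s < r -> P s) -> locally x P.
Proof.
  intros Hx H. apply (locally_interval _ x (-r) r).
  - simpl. apply Rabs_def2 in Hx. lra.
  - simpl. apply Rabs_def2 in Hx. lra.
  - intros s H1 H2. simpl in *. apply H. apply Rabs_def1; lra.
Qed.

Lemma Rep_ex_derive_x rho a F x y : Rep rho a F -> Rabs x < rho -> Rabs y < rho ->
  ex_derive (fun s => F s y) x.
Proof.
  intros [H1 H2] Hx Hy. destruct (pick_r rho x y Hx Hy) as (r & Hxr & Hyr & Hr & Hr0).
  assert (HA : AS a r) by (apply H1; lra).
  apply (ex_derive_ext_loc (PSeries (fun i => Series (fun j => a i j * y ^ j)))).
  - apply (loc_int _ x r Hxr). intros s Hs. rewrite H2 by lra.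
    symmetry. apply (DS_row a r); lra.
  - apply ex_derive_PSeries. apply (Rbar_lt_le_trans' _ r); auto. apply row_radius; auto; lra.
Qed.

Lemma DS_col a r x s : AS a r -> Rabs x <= r -> Rabs s <= r ->
  DS a x s = PSeries (fun j => Series (fun i => a i j * x ^ i)) s.
Proof.
  intros [H1 H2] Hx Hs.
  assert (Hb : forall i j, Rabs (a i j * x ^ i * s ^ j) <= Rabs (a i j) * r ^ (i + j)) by (intros; apply term_bound; auto).
  assert (Hr0 : 0 <= r) by (pose proof (Rabs_pos x); lra).
  assert (Hrow : forall i, ex_series (fun j => Rabs (a i j * x ^ i * s ^ j))).
  { intros i. apply (ex_series_leR _ (fun j => Rabs (a i j) * r ^ (i + j))); auto.
    intros j. rewrite Rabs_Rabsolu. auto. }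
  assert (Hsum : ex_series (fun i => Series (fun j => Rabs (a i j * x ^ i * s ^ j)))).
  { apply (ex_series_leR _ (fun i => Series (fun j => Rabs (a i j) * r ^ (i + j)))); auto.
    intros i. rewrite Rabs_pos_eq.
    + apply Series_le_gen; auto.
    + apply Series_nonneg. intros; apply Rabs_pos. auto. }
  unfold DS. rewrite <- (is_series_unique _ _ (fubini (fun i j => a i j * x ^ i * s ^ j) Hrow Hsum)).
  unfold PSeries. apply Series_ext. intros j. rewrite <- Series_scal_r. apply Series_ext. intros i. ring.
Qed.

Lemma col_radius2 a r x : AS a r -> 0 < r -> Rabs x <= r ->
  Rbar_le r (CV_radius (fun j => Series (fun i => a i j * x ^ i))).
Proof.
  intros [H1 H2] Hr Hx.
  apply CV_radius_ge with (M := Series (fun i => Series (fun j => Rabs (a i j) * r ^ (i + j)))).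
  intros j. rewrite Rabs_mult, (Rabs_pos_eq (r ^ j)) by (apply pow_le; lra).
  assert (Hc : ex_series (fun i => Rabs (a i j) * r ^ (i + j))).
  { apply (ex_series_leR _ (fun i => Series (fun j => Rabs (a i j) * r ^ (i + j)))); auto.
    intros i. rewrite Rabs_pos_eq by (apply Rmult_le_pos; [apply Rabs_pos| apply pow_le; lra]).
    apply (term_le_Series (fun j => Rabs (a i j) * r ^ (i + j))); auto.
    intros; apply Rmult_le_pos; [apply Rabs_pos| apply pow_le; lra]. }
  assert (Hu : ex_series (fun i => Rabs (a i j * x ^ i))).
  { apply (ex_series_leR _ (fun i => / r ^ j * (Rabs (a i j) * r ^ (i + j)))).
    - intros i. rewrite Rabs_Rabsolu, Rabs_mult, pow_add.
      replace (/ r ^ j * (Rabs (a i j) * (r ^ i * r ^ j))) with (Rabs (a i j) * r ^ i)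
        by (field; apply pow_nonzero; lra).
      apply Rmult_le_compat_l. apply Rabs_pos. apply pow_abs_le; auto.
    - apply ex_series_scalR. auto. }
  apply Rle_trans with (Series (fun i => Rabs (a i j) * r ^ (i + j))).
  2:{ apply Series_le_gen; auto.
      intros i. apply (term_le_Series (fun j => Rabs (a i j) * r ^ (i + j))); auto.
      intros; apply Rmult_le_pos; [apply Rabs_pos| apply pow_le; lra]. }
  apply Rle_trans with (Series (fun i => Rabs (a i j * x ^ i)) * r ^ j).
  - apply Rmult_le_compat_r. apply pow_le; lra. apply Series_Rabs; auto.
  - rewrite <- Series_scal_r. apply Series_le_gen; auto.
    + intros i. rewrite Rabs_mult, pow_add, <- Rmult_assoc. apply Rmult_le_compat_r. apply pow_le; lra.
      apply Rmult_le_compat_l. apply Rabs_pos. apply pow_abs_le; auto.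
    + apply ex_series_extR with (fun i => r ^ j * Rabs (a i j * x ^ i)). intros; ring.
      apply ex_series_scalR; auto.
Qed.

Lemma Rep_ex_derive_y rho a F x y : Rep rho a F -> Rabs x < rho -> Rabs y < rho ->
  ex_derive (fun s => F x s) y.
Proof.
  intros [H1 H2] Hx Hy. destruct (pick_r rho x y Hx Hy) as (r & Hxr & Hyr & Hr & Hr0).
  assert (HA : AS a r) by (apply H1; lra).
  apply (ex_derive_ext_loc (PSeries (fun j => Series (fun i => a i j * x ^ i)))).
  - apply (loc_int _ y r Hyr). intros s Hs. rewrite H2 by lra.
    symmetry. apply (DS_col a r); auto; lra.
  - apply ex_derive_PSeries. apply (Rbar_lt_le_trans' _ r); auto. apply col_radius2; auto; lra.
Qed.

Fixpoint dX (e : pex) : pex :=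
  match e with
  | EX => EC 1
  | EAdd a b => EAdd (dX a) (dX b)
  | EMul a b => EAdd (EMul (dX a) b) (EMul a (dX b))
  | _ => EC 0
  end.
Fixpoint dY (e : pex) : pex :=
  match e with
  | EY => EC 1
  | EAdd a b => EAdd (dY a) (dY b)
  | EMul a b => EAdd (EMul (dY a) b) (EMul a (dY b))
  | _ => EC 0
  end.
Fixpoint dV (e : pex) : pex :=
  match e with
  | EV => EC 1
  | EAdd a b => EAdd (dV a) (dV b)
  | EMul a b => EAdd (EMul (dV a) b) (EMul a (dV b))
  | _ => EC 0
  end.
Fixpoint noleaf (e : pex) : Prop :=
  match e with
  | EL _ _ _ => False
  | EAdd a b | EMul a b => noleaf a /\ noleaf b
  | _ => True
  end.

Lemma noleaf_dX e : noleaf e -> noleaf (dX e).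
Proof. induction e; simpl; tauto. Qed.
Lemma noleaf_dY e : noleaf e -> noleaf (dY e).
Proof. induction e; simpl; tauto. Qed.
Lemma noleaf_dV e : noleaf e -> noleaf (dV e).
Proof. induction e; simpl; tauto. Qed.

Lemma is_derive_eq (f : R -> R) (x l l' : R) : l = l' -> is_derive f x l -> is_derive f x l'.
Proof. intros ->; auto. Qed.

Lemma chain e (X Y V : R -> R) s0 X' Y' V' : noleaf e ->
  is_derive X s0 X' -> is_derive Y s0 Y' -> is_derive V s0 V' ->
  is_derive (fun s => evalf e (X s) (Y s) (V s)) s0
    (evalf (dX e) (X s0) (Y s0) (V s0) * X' + evalf (dY e) (X s0) (Y s0) (V s0) * Y'
     + evalf (dV e) (X s0) (Y s0) (V s0) * V').
Proof.
  intros Hn HX HY HV. induction e; simpl in *.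
  - refine (is_derive_eq _ _ _ _ _ (is_derive_const c s0)). unfold zero; simpl. ring.
  - refine (is_derive_eq _ _ _ _ _ HX). ring.
  - refine (is_derive_eq _ _ _ _ _ HY). ring.
  - refine (is_derive_eq _ _ _ _ _ HV). ring.
  - contradiction.
  - destruct Hn. refine (is_derive_eq _ _ _ _ _ (is_derive_plus _ _ _ _ _ (IHe1 H) (IHe2 H0))).
    unfold plus; simpl. ring.
  - destruct Hn. refine (is_derive_eq _ _ _ _ _ (is_derive_mult _ _ _ _ _ (IHe1 H) (IHe2 H0) _)).
    unfold plus, mult; simpl. ring. intros; unfold mult; simpl; ring.
Qed.

Lemma is_derive_extR (f g : R -> R) (x l : R) : (forall t, f t = g t) -> is_derive f x l -> is_derive g x l.
Proof. intros H Hf. exact (is_derive_ext f g x l H Hf). Qed.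

Lemma is_derive_oppR (f : R -> R) (x l : R) : is_derive f x l -> is_derive (fun t => - f t) x (- l).
Proof. intros H. exact (is_derive_opp f x l H). Qed.
Lemma is_derive_divR (f g : R -> R) (x df dg : R) : is_derive f x df -> is_derive g x dg -> g x <> 0 ->
  is_derive (fun t => f t / g t) x ((df * g x - f x * dg) / g x ^ 2).
Proof. apply is_derive_div. Qed.

Lemma derive_loc_zero (g : R -> R) x l : locally x (fun s => g s = 0) -> is_derive g x l -> l = 0.
Proof.
  intros Hl Hd. assert (H0 : is_derive g x 0).
  { apply (is_derive_ext_loc (fun _ => 0)). 
    - destruct Hl as [eps He]. exists eps. intros y Hy. symmetry. apply He, Hy.
    - apply (is_derive_const 0). }
  apply is_derive_unique in Hd. apply is_derive_unique in H0. congruence.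
Qed.

Section Graph.
Variable Phi : pex.
Hypothesis HPhi : noleaf Phi.
Variable f : R -> R -> R.
Variable r : R.
Hypothesis Hzero : forall x y, box r x y -> evalf Phi x y (f x y) = 0.
Hypothesis Hdx : forall x y, box r x y -> ex_derive (fun s => f s y) x.
Hypothesis Hdy : forall x y, box r x y -> ex_derive (fun s => f x s) y.
Hypothesis Hnz : forall x y, box r x y -> evalf (dV Phi) x y (f x y) <> 0.

Definition PX x y := evalf (dX Phi) x y (f x y).
Definition PY x y := evalf (dY Phi) x y (f x y).
Definition PT x y := evalf (dV Phi) x y (f x y).
Definition G1 x y := - PX x y / PT x y.
Definition G2 x y := - PY x y / PT x y.

Lemma box_loc_x x y : box r x y -> locally x (fun s => box r s y).
Proof. intros [Hx Hy]. apply (loc_int _ x r Hx). intros s Hs. split; auto. Qed.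
Lemma box_loc_y x y : box r x y -> locally y (fun s => box r x s).
Proof. intros [Hx Hy]. apply (loc_int _ y r Hy). intros s Hs. split; auto. Qed.

Lemma fx_is x y : box r x y -> is_derive (fun s => f s y) x (G1 x y).
Proof.
  intros Hb. pose proof (Derive_correct _ _ (Hdx x y Hb)) as Hd. set (d := Derive (fun s => f s y) x) in *.
  pose proof (chain Phi (fun s => s) (fun _ => y) (fun s => f s y) x 1 0 d HPhi
    (is_derive_id x) (is_derive_const y x) Hd) as H.
  apply derive_loc_zero in H.
  - unfold G1, PX, PT. replace (- evalf (dX Phi) x y (f x y) / evalf (dV Phi) x y (f x y)) with d; auto.
    field_simplify_eq; [|apply Hnz; auto]. lra.
  - generalize (box_loc_x x y Hb). apply filter_imp. intros s Hs. apply Hzero; auto.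
Qed.

Lemma fy_is x y : box r x y -> is_derive (fun s => f x s) y (G2 x y).
Proof.
  intros Hb. pose proof (Derive_correct _ _ (Hdy x y Hb)) as Hd. set (d := Derive (fun s => f x s) y) in *.
  pose proof (chain Phi (fun _ => x) (fun s => s) (fun s => f x s) y 0 1 d HPhi
    (is_derive_const x y) (is_derive_id y) Hd) as H.
  apply derive_loc_zero in H.
  - unfold G2, PY, PT. replace (- evalf (dY Phi) x y (f x y) / evalf (dV Phi) x y (f x y)) with d; auto.
    field_simplify_eq; [|apply Hnz; auto]. lra.
  - generalize (box_loc_y x y Hb). apply filter_imp. intros s Hs. apply Hzero; auto.
Qed.

Lemma Dx_f x y : box r x y -> Dx f x y = G1 x y.
Proof. intros Hb. apply is_derive_unique, fx_is, Hb. Qed.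
Lemma Dy_f x y : box r x y -> Dy f x y = G2 x y.
Proof. intros Hb. apply is_derive_unique, fy_is, Hb. Qed.

Definition EvX (e : pex) x y := evalf (dX e) x y (f x y) + evalf (dV e) x y (f x y) * G1 x y.
Definition EvY (e : pex) x y := evalf (dY e) x y (f x y) + evalf (dV e) x y (f x y) * G2 x y.

Lemma along_x e x y : noleaf e -> box r x y ->
  is_derive (fun s => evalf e s y (f s y)) x (EvX e x y).
Proof.
  intros He Hb. eapply is_derive_eq; [|apply (chain e (fun s => s) (fun _ => y) (fun s => f s y) x 1 0 (G1 x y) He
    (is_derive_id x) (is_derive_const y x) (fx_is x y Hb))].
  unfold EvX. ring.
Qed.
Lemma along_y e x y : noleaf e -> box r x y ->
  is_derive (fun s => evalf e x s (f x s)) y (EvY e x y).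
Proof.
  intros He Hb. eapply is_derive_eq; [|apply (chain e (fun _ => x) (fun s => s) (fun s => f x s) y 0 1 (G2 x y) He
    (is_derive_const x y) (is_derive_id y) (fy_is x y Hb))].
  unfold EvY. ring.
Qed.

Definition quot (a b da db : R) := - (da * b - a * db) / b ^ 2.

Lemma G1_x x y : box r x y -> is_derive (fun s => G1 s y) x
  (quot (PX x y) (PT x y) (EvX (dX Phi) x y) (EvX (dV Phi) x y)).
Proof.
  intros Hb. unfold G1, quot.
  apply (is_derive_extR (fun s => - (PX s y / PT s y))). intros; unfold Rdiv; ring.
  eapply is_derive_eq.
  2:{ apply is_derive_oppR, is_derive_divR; [apply along_x; auto; apply noleaf_dX; auto | apply along_x; auto; apply noleaf_dV; auto | apply Hnz; auto]. }
  unfold Rdiv; ring.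
Qed.
Lemma G2_x x y : box r x y -> is_derive (fun s => G2 s y) x
  (quot (PY x y) (PT x y) (EvX (dY Phi) x y) (EvX (dV Phi) x y)).
Proof.
  intros Hb. unfold G2, quot.
  apply (is_derive_extR (fun s => - (PY s y / PT s y))). intros; unfold Rdiv; ring.
  eapply is_derive_eq.
  2:{ apply is_derive_oppR, is_derive_divR; [apply along_x; auto; apply noleaf_dY; auto | apply along_x; auto; apply noleaf_dV; auto | apply Hnz; auto]. }
  unfold Rdiv; ring.
Qed.
Lemma G2_y x y : box r x y -> is_derive (fun s => G2 x s) y
  (quot (PY x y) (PT x y) (EvY (dY Phi) x y) (EvY (dV Phi) x y)).
Proof.
  intros Hb. unfold G2, quot.
  apply (is_derive_extR (fun s => - (PY x s / PT x s))). intros; unfold Rdiv; ring.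
  eapply is_derive_eq.
  2:{ apply is_derive_oppR, is_derive_divR; [apply along_y; auto; apply noleaf_dY; auto | apply along_y; auto; apply noleaf_dV; auto | apply Hnz; auto]. }
  unfold Rdiv; ring.
Qed.

Lemma G1_y x y : box r x y -> is_derive (fun s => G1 x s) y
  (quot (PX x y) (PT x y) (EvY (dX Phi) x y) (EvY (dV Phi) x y)).
Proof.
  intros Hb. unfold G1, quot.
  apply (is_derive_extR (fun s => - (PX x s / PT x s))). intros; unfold Rdiv; ring.
  eapply is_derive_eq.
  2:{ apply is_derive_oppR, is_derive_divR; [apply along_y; auto; apply noleaf_dX; auto | apply along_y; auto; apply noleaf_dV; auto | apply Hnz; auto]. }
  unfold Rdiv; ring.
Qed.

Lemma DxDx_f x y : box r x y -> Dx (Dx f) x y = quot (PX x y) (PT x y) (EvX (dX Phi) x y) (EvX (dV Phi) x y).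
Proof.
  intros Hb. unfold Dx at 1. rewrite (Derive_ext_loc _ (fun s => G1 s y)).
  - apply is_derive_unique, G1_x, Hb.
  - generalize (box_loc_x x y Hb). apply filter_imp. intros s Hs. apply Dx_f; auto.
Qed.
Lemma DxDy_f x y : box r x y -> Dx (Dy f) x y = quot (PY x y) (PT x y) (EvX (dY Phi) x y) (EvX (dV Phi) x y).
Proof.
  intros Hb. unfold Dx at 1. rewrite (Derive_ext_loc _ (fun s => G2 s y)).
  - apply is_derive_unique, G2_x, Hb.
  - generalize (box_loc_x x y Hb). apply filter_imp. intros s Hs. apply Dy_f; auto.
Qed.
Lemma DyDy_f x y : box r x y -> Dy (Dy f) x y = quot (PY x y) (PT x y) (EvY (dY Phi) x y) (EvY (dV Phi) x y).
Proof.
  intros Hb. unfold Dy at 1. rewrite (Derive_ext_loc _ (fun s => G2 x s)).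
  - apply is_derive_unique, G2_y, Hb.
  - generalize (box_loc_y x y Hb). apply filter_imp. intros s Hs. apply Dy_f; auto.
Qed.

Lemma BF_eq x y : box r x y -> BF f x y = 1 - G1 x y ^ 2 - G2 x y ^ 2.
Proof. intros Hb. unfold BF. rewrite Dx_f, Dy_f; auto. Qed.

Lemma AF_eq x y : box r x y -> AF f x y =
  (1 - G1 x y ^ 2) * quot (PY x y) (PT x y) (EvY (dY Phi) x y) (EvY (dV Phi) x y)
  + 2 * G1 x y * G2 x y * quot (PY x y) (PT x y) (EvX (dY Phi) x y) (EvX (dV Phi) x y)
  + (1 - G2 x y ^ 2) * quot (PX x y) (PT x y) (EvX (dX Phi) x y) (EvX (dV Phi) x y).
Proof. intros Hb. unfold AF. rewrite Dx_f, Dy_f, DxDx_f, DxDy_f, DyDy_f; auto. Qed.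

Lemma BF_dx x y : box r x y -> is_derive (fun s => BF f s y) x
  (- 2 * G1 x y * quot (PX x y) (PT x y) (EvX (dX Phi) x y) (EvX (dV Phi) x y)
   - 2 * G2 x y * quot (PY x y) (PT x y) (EvX (dY Phi) x y) (EvX (dV Phi) x y)).
Proof.
  intros Hb. apply (is_derive_ext_loc (fun s => 1 - G1 s y ^ 2 - G2 s y ^ 2)).
  - generalize (box_loc_x x y Hb). apply filter_imp. intros s Hs. symmetry. apply BF_eq; auto.
  - pose proof (G1_x x y Hb) as H1. pose proof (G2_x x y Hb) as H2.
    apply (is_derive_pow _ 2) in H1. apply (is_derive_pow _ 2) in H2.
    eapply is_derive_eq; [|apply (is_derive_minus _ _ _ _ _ (is_derive_minus _ _ _ _ _ (is_derive_const 1 x) H1) H2)].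
    unfold minus, plus, opp, zero; simpl. ring.
Qed.
Lemma BF_dy x y : box r x y -> is_derive (fun s => BF f x s) y
  (- 2 * G1 x y * quot (PX x y) (PT x y) (EvY (dX Phi) x y) (EvY (dV Phi) x y)
   - 2 * G2 x y * quot (PY x y) (PT x y) (EvY (dY Phi) x y) (EvY (dV Phi) x y)).
Proof.
  intros Hb. apply (is_derive_ext_loc (fun s => 1 - G1 x s ^ 2 - G2 x s ^ 2)).
  - generalize (box_loc_y x y Hb). apply filter_imp. intros s Hs. symmetry. apply BF_eq; auto.
  - pose proof (G1_y x y Hb) as H1. pose proof (G2_y x y Hb) as H2.
    apply (is_derive_pow _ 2) in H1. apply (is_derive_pow _ 2) in H2.
    eapply is_derive_eq; [|apply (is_derive_minus _ _ _ _ _ (is_derive_minus _ _ _ _ _ (is_derive_const 1 y) H1) H2)].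
    unfold minus, plus, opp, zero; simpl. ring.
Qed.
End Graph.

Lemma dXY e x y t : evalf (dX (dY e)) x y t = evalf (dY (dX e)) x y t.
Proof. induction e; simpl; try ring; rewrite ?IHe1, ?IHe2; ring. Qed.
Lemma dXV e x y t : evalf (dX (dV e)) x y t = evalf (dV (dX e)) x y t.
Proof. induction e; simpl; try ring; rewrite ?IHe1, ?IHe2; ring. Qed.
Lemma dYV e x y t : evalf (dY (dV e)) x y t = evalf (dV (dY e)) x y t.
Proof. induction e; simpl; try ring; rewrite ?IHe1, ?IHe2; ring. Qed.

Definition Mform (Phi : pex) (x y t : R) : R :=
  let px := evalf (dX Phi) x y t in
  let py := evalf (dY Phi) x y t in
  let pt := evalf (dV Phi) x y t in
  let pxx := evalf (dX (dX Phi)) x y t in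
  let pxy := evalf (dY (dX Phi)) x y t in
  let pxt := evalf (dV (dX Phi)) x y t in
  let pyy := evalf (dY (dY Phi)) x y t in
  let pyt := evalf (dV (dY Phi)) x y t in
  let ptt := evalf (dV (dV Phi)) x y t in
  (pt ^ 2 - px ^ 2) * (pyy * pt ^ 2 - 2 * pyt * py * pt + ptt * py ^ 2)
  + 2 * px * py * (pxy * pt ^ 2 - pxt * py * pt - pyt * px * pt + ptt * px * py)
  + (pt ^ 2 - py ^ 2) * (pxx * pt ^ 2 - 2 * pxt * px * pt + ptt * px ^ 2).

Definition AFform (Phi : pex) (x y t : R) : R :=
  let px := evalf (dX Phi) x y t in
  let py := evalf (dY Phi) x y t in
  let pt := evalf (dV Phi) x y t in
  let g1 := - px / pt in
  let g2 := - py / pt in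
  let evx e := evalf (dX e) x y t + evalf (dV e) x y t * g1 in
  let evy e := evalf (dY e) x y t + evalf (dV e) x y t * g2 in
  (1 - g1 ^ 2) * quot py pt (evy (dY Phi)) (evy (dV Phi))
  + 2 * g1 * g2 * quot py pt (evx (dY Phi)) (evx (dV Phi))
  + (1 - g2 ^ 2) * quot px pt (evx (dX Phi)) (evx (dV Phi)).

Lemma AF_M Phi x y t : evalf (dV Phi) x y t <> 0 -> AFform Phi x y t = - Mform Phi x y t / (evalf (dV Phi) x y t) ^ 5.
Proof.
  intros H. unfold AFform, Mform, quot. cbv zeta.
  rewrite (dXY Phi), (dXV Phi), (dYV Phi).
  set (px := evalf (dX Phi) x y t). set (py := evalf (dY Phi) x y t). set (pt := evalf (dV Phi) x y t).
  set (pxx := evalf (dX (dX Phi)) x y t). set (pxy := evalf (dY (dX Phi)) x y t).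
  set (pxt := evalf (dV (dX Phi)) x y t). set (pyy := evalf (dY (dY Phi)) x y t).
  set (pyt := evalf (dV (dY Phi)) x y t). set (ptt := evalf (dV (dV Phi)) x y t).
  field. exact H.
Qed.

Lemma AF_form_eq Phi f r x y : noleaf Phi ->
  (forall x y, box r x y -> evalf Phi x y (f x y) = 0) ->
  (forall x y, box r x y -> ex_derive (fun s => f s y) x) ->
  (forall x y, box r x y -> ex_derive (fun s => f x s) y) ->
  (forall x y, box r x y -> evalf (dV Phi) x y (f x y) <> 0) ->
  box r x y -> AF f x y = AFform Phi x y (f x y).
Proof.
  intros H1 H2 H3 H4 H5 Hb. rewrite (AF_eq Phi H1 f r H2 H3 H4 H5 x y Hb). reflexivity.
Qed.

Fixpoint Epow (e : pex) (n : nat) : pex := match n with O => EC 1 | S n => EMul e (Epow e n) end.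
Definition Eneg (e : pex) : pex := EMul (EC (-1)) e.
Definition Esub (a b : pex) : pex := EAdd a (Eneg b).
Definition Emon (c : R) (a b k : nat) : pex := EMul (EC c) (EMul (Epow EX a) (EMul (Epow EY b) (Epow EV k))).

Lemma noleaf_Epow e n : noleaf e -> noleaf (Epow e n).
Proof. induction n; simpl; tauto. Qed.

Lemma evalf_Epow e n x y v : evalf (Epow e n) x y v = (evalf e x y v) ^ n.
Proof. induction n; simpl; auto. rewrite IHn. auto. Qed.

Lemma absE_nonneg_gen e a b w : 0 <= a -> 0 <= b -> 0 <= w -> noleaf e -> 0 <= evalf (absE e) a b w.
Proof.
  intros Ha Hb Hw. induction e; simpl; intros Hn; auto; try tauto.
  - apply Rabs_pos.
  - destruct Hn. apply Rplus_le_le_0_compat; auto.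
  - destruct Hn. apply Rmult_le_pos; auto.
Qed.

Lemma eval_abs_bound e x y v a b w : noleaf e -> Rabs x <= a -> Rabs y <= b -> Rabs v <= w ->
  Rabs (evalf e x y v) <= evalf (absE e) a b w.
Proof.
  intros Hn Hx Hy Hv.
  assert (Ha : 0 <= a) by (pose proof (Rabs_pos x); lra).
  assert (Hb : 0 <= b) by (pose proof (Rabs_pos y); lra).
  assert (Hw : 0 <= w) by (pose proof (Rabs_pos v); lra).
  induction e; simpl in *; auto; try lra; try tauto.
  - destruct Hn. eapply Rle_trans. apply Rabs_triang. specialize (IHe1 H). specialize (IHe2 H0). lra.
  - destruct Hn. rewrite Rabs_mult. apply Rmult_le_compat; auto; apply Rabs_pos.
Qed.

Lemma tn_le_AS r N a : 0 <= r -> AS a r -> tn r N a <= Series (fun i => Series (fun j => Rabs (a i j) * r ^ (i + j))).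
Proof.
  intros Hr [H1 H2]. rewrite tn_fsum. unfold fsum.
  assert (Hnn : forall i j, 0 <= Rabs (a i j) * r ^ (i + j)) by (intros; apply Rmult_le_pos; [apply Rabs_pos| apply pow_le; lra]).
  eapply Rle_trans; [|apply (sum_le_Series _ N)].
  - apply sum_le_sum. intros i _. eapply Rle_trans; [|apply (sum_le_Series _ N)]; auto.
    apply sum_le_sum. intros j _. unfold aabs, trunc. destruct (i + j <=? N)%nat.
    + rewrite pow_add. lra.
    + rewrite Rabs_R0. rewrite Rmult_0_l, Rmult_0_l. auto.
  - intros; apply Series_nonneg; auto.
  - auto.
Qed.

Lemma pipeline_AF Phi f r x y : noleaf Phi ->
  (forall x y, box r x y -> evalf Phi x y (f x y) = 0) ->
  (forall x y, box r x y -> ex_derive (fun s => f s y) x) ->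
  (forall x y, box r x y -> ex_derive (fun s => f x s) y) ->
  (forall x y, box r x y -> evalf (dV Phi) x y (f x y) <> 0) ->
  (forall x y t, evalf Phi x y t = 0 -> Mform Phi x y t = 0) ->
  box r x y -> AF f x y = 0.
Proof.
  intros H1 H2 H3 H4 H5 HM Hb. rewrite (AF_form_eq Phi f r x y); auto.
  rewrite AF_M by auto. rewrite HM by auto. unfold Rdiv. ring.
Qed.

Lemma BF_form Phi f r x y : noleaf Phi ->
  (forall x y, box r x y -> evalf Phi x y (f x y) = 0) ->
  (forall x y, box r x y -> ex_derive (fun s => f s y) x) ->
  (forall x y, box r x y -> ex_derive (fun s => f x s) y) ->
  (forall x y, box r x y -> evalf (dV Phi) x y (f x y) <> 0) ->
  box r x y ->
  BF f x y = ((evalf (dV Phi) x y (f x y)) ^ 2 - (evalf (dX Phi) x y (f x y)) ^ 2 - (evalf (dY Phi) x y (f x y)) ^ 2)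
             / (evalf (dV Phi) x y (f x y)) ^ 2.
Proof.
  intros H1 H2 H3 H4 H5 Hb. rewrite (BF_eq Phi H1 f r H2 H3 H4 H5 x y Hb).
  unfold G1, G2, PX, PY, PT. field. apply H5; auto.
Qed.

Lemma Rep_box_derive rho a f : Rep rho a f ->
  (forall x y, box rho x y -> ex_derive (fun s => f s y) x) /\
  (forall x y, box rho x y -> ex_derive (fun s => f x s) y).
Proof.
  intros H. split; intros x y [Hx Hy]. apply (Rep_ex_derive_x rho a); auto. apply (Rep_ex_derive_y rho a); auto.
Qed.

Section Ex.
Variable Phi : pex.
Hypothesis HPhi : noleaf Phi.
Variable f : R -> R -> R.
Variables r : R.
Hypothesis Hr : 0 < r.
Hypothesis Hzero : forall x y, box r x y -> evalf Phi x y (f x y) = 0.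
Hypothesis Hdx : forall x y, box r x y -> ex_derive (fun s => f s y) x.
Hypothesis Hdy : forall x y, box r x y -> ex_derive (fun s => f x s) y.
Hypothesis Hnz : forall x y, box r x y -> evalf (dV Phi) x y (f x y) <> 0.

Lemma ex_Dx x y : box r x y -> Dx f x y = - evalf (dX Phi) x y (f x y) / evalf (dV Phi) x y (f x y).
Proof. intros Hb. rewrite (Dx_f Phi HPhi f r); auto. Qed.
Lemma ex_Dy x y : box r x y -> Dy f x y = - evalf (dY Phi) x y (f x y) / evalf (dV Phi) x y (f x y).
Proof. intros Hb. rewrite (Dy_f Phi HPhi f r); auto. Qed.

Lemma ex_BFdx x y : box r x y -> Dx (BF f) x y =
  (- 2 * G1 Phi f x y * quot (PX Phi f x y) (PT Phi f x y) (EvX Phi f (dX Phi) x y) (EvX Phi f (dV Phi) x y)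
   - 2 * G2 Phi f x y * quot (PY Phi f x y) (PT Phi f x y) (EvX Phi f (dY Phi) x y) (EvX Phi f (dV Phi) x y)).
Proof. intros Hb. apply is_derive_unique. apply (BF_dx Phi HPhi f r); auto. Qed.
Lemma ex_BFdy x y : box r x y -> Dy (BF f) x y =
  (- 2 * G1 Phi f x y * quot (PX Phi f x y) (PT Phi f x y) (EvY Phi f (dX Phi) x y) (EvY Phi f (dV Phi) x y)
   - 2 * G2 Phi f x y * quot (PY Phi f x y) (PT Phi f x y) (EvY Phi f (dY Phi) x y) (EvY Phi f (dV Phi) x y)).
Proof. intros Hb. apply is_derive_unique. apply (BF_dy Phi HPhi f r); auto. Qed.
End Ex.

Lemma box0 r : 0 < r -> box r 0 0.
Proof. intros H. split; rewrite Rabs_R0; auto. Qed.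

Lemma dense_of_x r (B : R -> R -> R) : 0 < r ->
  (forall x y, box r x y -> x <> 0 -> B x y <> 0) ->
  forall x y, box r x y -> forall eps, 0 < eps ->
    exists x' y', box r x' y' /\ Rabs (x' - x) < eps /\ Rabs (y' - y) < eps /\ B x' y' <> 0.
Proof.
  intros Hr HB x y Hb eps He.
  destruct (Req_dec x 0) as [Hx|Hx].
  - subst x. set (e := Rmin eps r / 2).
    assert (He0 : 0 < e) by (unfold e; apply Rmin_case; lra).
    assert (He1 : e < eps) by (unfold e; pose proof (Rmin_l eps r); lra).
    assert (He2 : e < r) by (unfold e; pose proof (Rmin_r eps r); lra).
    exists e, y. destruct Hb as [_ Hy].
    assert (Hb' : box r e y) by (split; auto; rewrite Rabs_pos_eq; lra).
    split; [exact Hb'|]. split; [rewrite Rminus_0_r, Rabs_pos_eq; lra|]. split.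
    + replace (y - y) with 0 by ring. rewrite Rabs_R0; lra.
    + apply HB; auto; lra.
  - exists x, y. split; [exact Hb|]. replace (x - x) with 0 by ring. replace (y - y) with 0 by ring.
    rewrite Rabs_R0. split; [lra|]. split; [lra|]. apply HB; auto.
Qed.

Definition f1 (x y : R) : R := y + 1 / 3 * x ^ 3.
Definition Ef1 : pex := EAdd EY (EMul (EC (1/3)) (Epow EX 3)).
Definition Phi1 : pex := Esub EV Ef1.

Lemma Rep_f1 : Rep 1 (evala Ef1 (fun _ _ => 0)) f1.
Proof.
  eapply Rep_ext. apply (Rep_eval 1 Ef1 (fun _ _ => 0) (fun _ _ => 0)).
  - apply Rep_ext_arr with (dC 0). apply Rep_dC. intros [|i] [|j]; reflexivity.
  - simpl. tauto.
  - intros x y _ _. unfold f1. simpl. ring.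
Qed.

Lemma f1_Phi x y : evalf Phi1 x y (f1 x y) = 0.
Proof. unfold f1. simpl. ring. Qed.
Lemma f1_Pt x y t : evalf (dV Phi1) x y t = 1.
Proof. simpl. ring. Qed.
Lemma noleaf_Phi1 : noleaf Phi1.
Proof. simpl. tauto. Qed.
Lemma M1_zero x y t : Mform Phi1 x y t = 0.
Proof. unfold Mform. cbv zeta. simpl. ring. Qed.

Lemma f1_der : (forall x y, box 1 x y -> ex_derive (fun s => f1 s y) x) /\
               (forall x y, box 1 x y -> ex_derive (fun s => f1 x s) y).
Proof. apply (Rep_box_derive 1 _ _ Rep_f1). Qed.

Lemma f1_nz x y : box 1 x y -> evalf (dV Phi1) x y (f1 x y) <> 0.
Proof. intros _. rewrite f1_Pt. lra. Qed.

Lemma f1_BF x y : box 1 x y -> BF f1 x y = - x ^ 4.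
Proof.
  intros Hb. rewrite (BF_form Phi1 f1 1 x y noleaf_Phi1 (fun x y _ => f1_Phi x y) (proj1 f1_der) (proj2 f1_der) f1_nz Hb).
  unfold f1. simpl. field.
Qed.

Theorem ex1 : Z0_I f1 /\ no_spacelike_part f1.
Proof.
  destruct f1_der as [Hdx Hdy].
  assert (HZ : forall x y, box 1 x y -> evalf Phi1 x y (f1 x y) = 0) by (intros; apply f1_Phi).
  split.
  - split.
    + split; [|split].
      * split; [apply (Rep_analytic0 1 _ _ ltac:(lra) Rep_f1)|]. split; [|split].
        -- split; [|split].
           ++ unfold f1. simpl. ring.
           ++ rewrite (ex_Dx Phi1 noleaf_Phi1 f1 1 HZ Hdx f1_nz 0 0 (box0 1 ltac:(lra))). unfold f1. simpl. field.
           ++ rewrite (ex_Dy Phi1 noleaf_Phi1 f1 1 HZ Hdy f1_nz 0 0 (box0 1 ltac:(lra))). unfold f1. simpl. field.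
        -- exists 1. split; [lra|]. apply (dense_of_x 1 (BF f1)); [lra|]. intros x y Hb Hx.
           rewrite f1_BF by auto. intros H. apply (pow_nonzero x 4) in Hx. lra.
        -- exists 1. split; [lra|]. intros x y Hb.
           apply (pipeline_AF Phi1 f1 1 x y); auto. apply noleaf_Phi1. intros; apply f1_nz; auto. intros; apply M1_zero.
      * rewrite (ex_BFdx Phi1 noleaf_Phi1 f1 1 HZ Hdx Hdy f1_nz 0 0 (box0 1 ltac:(lra))).
        unfold EvX, EvY, G1, G2, PX, PY, PT, quot, f1. simpl. field.
      * rewrite (ex_BFdy Phi1 noleaf_Phi1 f1 1 HZ Hdx Hdy f1_nz 0 0 (box0 1 ltac:(lra))).
        unfold EvX, EvY, G1, G2, PX, PY, PT, quot, f1. simpl. field.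
    + exists (fun _ => 0), (fun _ => 1), (fun _ _ => 0). split; [|split].
      * split; [|split; [|split]].
        -- apply (Rep_analytic0 1 (dC 0)); [lra| apply Rep_dC].
        -- apply (Rep_analytic0 1 (dC 1)); [lra| apply Rep_dC].
        -- apply (Rep_analytic0 1 (dC 0)); [lra| apply Rep_dC].
        -- exists 1. split; [lra|]. intros x y _. unfold f1. field.
      * exists 1. split; [lra|]. intros y _. rewrite Derive_const. ring.
      * exists 1. split; [lra|]. auto.
  - exists 1. split; [lra|]. intros x y Hb. rewrite f1_BF by auto.
    assert (0 <= x ^ 4) by (replace (x ^ 4) with ((x ^ 2) ^ 2) by ring; apply pow2_ge_0). lra.
Qed.

Definition EpP : pex := Esub EV EY.
Definition EqQ : pex := EAdd EV EY.
Definition Phi2 : pex :=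
  EAdd (EAdd (EAdd (EMul (EC 9) (EMul (Epow EqQ 3) (Epow EpP 2)))
                   (EMul (Esub (EMul (EC 18) (EMul (Epow EX 2) (Epow EqQ 2))) (EC 3)) EpP))
             (EMul (EC 16) (EMul (Epow EX 6) (Epow EqQ 3))))
       (EMul (EC (-3)) (EMul (Epow EX 4) EqQ)).
Definition Eqh : pex := EAdd (EMul (Epow EX 4) EV) (EMul (EC 2) EY).
Definition Theta2 : pex :=
  EAdd (EAdd (EAdd (EMul (EC 3) (EMul (Epow EX 4) (EMul (Epow Eqh 3) (EMul EV EV))))
                   (EMul (EC 6) (EMul (Epow EX 2) (EMul (Epow Eqh 2) EV))))
             (EMul (EC (16/3)) (EMul (Epow EX 2) (Epow Eqh 3))))
       (Eneg Eqh).
Definition RptE : pex := (EAdd (EAdd (EAdd (EAdd (EAdd (EAdd (EAdd (EAdd (EAdd (EAdd (Emon (72) 2 2 0) (Emon (-3) 4 0 0)) (Emon (144) 4 3 1)) (Emon (144) 6 1 1)) (Emon (192) 6 2 0)) (Emon (324) 8 2 2)) (Emon (54) 10 0 2)) (Emon (192) 10 1 1)) (Emon (216) 12 1 3)) (Emon (48) 14 0 2)) (Emon (45) 16 0 4)).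
Definition KE : pex := (EAdd (EAdd (EAdd (EAdd (EAdd (EAdd (EAdd (EAdd (EAdd (EAdd (EAdd (EAdd (EAdd (EAdd (EAdd (EAdd (EAdd (EAdd (EAdd (EAdd (EAdd (EAdd (EAdd (EAdd (EAdd (EAdd (EAdd (EAdd (EAdd (EAdd (EAdd (EAdd (EAdd (EAdd (EAdd (EAdd (EAdd (EAdd (EAdd (EAdd (Emon (-864) 2 1 1) (Emon (-3744) 2 2 0)) (Emon (-1296) 4 2 2)) (Emon (25920) 4 3 1)) (Emon (92160) 4 4 0)) (Emon (-432) 6 0 2)) (Emon (-3744) 6 1 1)) (Emon (51840) 6 4 2)) (Emon (-110592) 6 5 1)) (Emon (-589824) 6 6 0)) (Emon (-1296) 8 1 3)) (Emon (38880) 8 2 2)) (Emon (184320) 8 3 1)) (Emon (62208) 8 5 3)) (Emon (-936) 10 0 2)) (Emon (103680) 10 3 3)) (Emon (-276480) 10 4 2)) (Emon (-1769472) 10 5 1)) (Emon (-324) 12 0 4)) (Emon (19440) 12 1 3)) (Emon (138240) 12 2 2)) (Emon (155520) 12 4 4)) (Emon (77760) 14 2 4)) (Emon (-276480) 14 3 3)) (Emon (-2211840) 14 4 2)) (Emon (3240) 16 0 4)) (Emon (46080) 16 1 3)) (Emon (155520) 16 3 5)) (Emon (25920) 18 1 5)) (Emon (-138240) 18 2 4)) (Emon (-1474560) 18 3 3)) (Emon (5760) 20 0 4)) (Emon (77760) 20 2 6)) (Emon (3240) 22 0 6)) (Emon (-34560) 22 1 5)) (Emon (-552960) 22 2 4))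 (Emon (19440) 24 1 7)) (Emon (-3456) 26 0 6)) (Emon (-110592) 26 1 5)) (Emon (1944) 28 0 8)) (Emon (-9216) 30 0 6)).
Definition Lam2 (x y t : R) : R := (-5832)*t^2 + (157464)*t^6 + (-787320)*t^10 + (-3936600)*t^14 + (104976)*y*t^5 + (-629856)*y*t^9 + (-14171760)*y*t^13 + (5832)*y^2 + (-367416)*y^2*t^4 + (3306744)*y^2*t^8 + (-1732104)*y^2*t^12 + (-209952)*y^3*t^3 + (2519424)*y^3*t^7 + (49758624)*y^3*t^11 + (262440)*y^4*t^2 + (-5353776)*y^4*t^6 + (47711592)*y^4*t^10 + (104976)*y^5*t + (-3779136)*y^5*t^5 + (-56372112)*y^5*t^9 + (-52488)*y^6 + (4094064)*y^6*t^4 + (-94950792)*y^6*t^8 + (2519424)*y^7*t^3 + (11337408)*y^7*t^7 + (-1417176)*y^8*t^2 + (75110328)*y^8*t^6 + (-629856)*y^9*t + (19210608)*y^9*t^5 + (157464)*y^10 + (-24091992)*y^10*t^4 + (-10707552)*y^11*t^3 + (2047032)*y^12*t^2 + (944784)*y^13*t + (-157464)*y^14 + (-3888)*x^2 + (104976)*x^2*t^4 + (3254256)*x^2*t^8 + (-59311440)*x^2*t^12 + (-209952)*x^2*y*t^3 + (14276736)*x^2*y*t^7 + (-212261472)*x^2*y*t^11 + (-419904)*x^2*y^2*t^2 + (10497600)*x^2*y^2*t^6 + (-80621568)*x^2*y^2*t^10 + (209952)*x^2*y^3*t + (-24354432)*x^2*y^3*t^5 + (538946784)*x^2*y^3*t^9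 + (314928)*x^2*y^4 + (-32542560)*x^2*y^4*t^4 + (622612656)*x^2*y^4*t^8 + (5878656)*x^2*y^5*t^3 + (-328784832)*x^2*y^5*t^7 + (20575296)*x^2*y^6*t^2 + (-793618560)*x^2*y^6*t^6 + (4199040)*x^2*y^7*t + (-124711488)*x^2*y^7*t^5 + (-1784592)*x^2*y^8 + (341067024)*x^2*y^8*t^4 + (141297696)*x^2*y^9*t^3 + (-32752512)*x^2*y^10*t^2 + (-14486688)*x^2*y^11*t + (2624400)*x^2*y^12 + (71928)*x^4*t^2 + (6753456)*x^4*t^6 + (-165494664)*x^4*t^10 + (209952000)*x^4*t^14 + (-19440)*x^4*y*t + (24214464)*x^4*y*t^5 + (-612325008)*x^4*y*t^9 + (1175731200)*x^4*y*t^13 + (-91368)*x^4*y^2 + (19070640)*x^4*y^2*t^4 + (-466775784)*x^4*y^2*t^8 + (2023937280)*x^4*y^2*t^12 + (-18195840)*x^4*y^3*t^3 + (846946368)*x^4*y^3*t^7 + (-537477120)*x^4*y^3*t^11 + (-28168560)*x^4*y^4*t^2 + (1442685168)*x^4*y^4*t^6 + (-5735888640)*x^4*y^4*t^10 + (-6018624)*x^4*y^5*t + (179089056)*x^4*y^5*t^5 + (-5273994240)*x^4*y^5*t^9 + (2344464)*x^4*y^6 + (-826476048)*x^4*y^6*t^4 + (2796560640)*x^4*y^6*t^8 + (-449717184)*x^4*y^7*t^3 + (7255941120)*x^4*y^7*t^7 + (19473048)*x^4*y^8*t^2 + (2645395200)*x^4*y^8*t^6 + (36006768)*x^4*y^9*t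 + (-2385054720)*x^4*y^9*t^5 + (-3411720)*x^4*y^10 + (-2124714240)*x^4*y^10*t^4 + (-268738560)*x^4*y^11*t^3 + (193155840)*x^4*y^12*t^2 + (33592320)*x^4*y^13*t + (-8398080)*x^4*y^14 + (-7776)*x^6 + (1119744)*x^6*t^4 + (-139198176)*x^6*t^8 + (558472320)*x^6*t^12 + (4572288)*x^6*y*t^3 + (-527259456)*x^6*y*t^7 + (3066978816)*x^6*y*t^11 + (5598720)*x^6*y^2*t^2 + (-574568640)*x^6*y^2*t^6 + (5591441664)*x^6*y^2*t^10 + (1959552)*x^6*y^3*t + (160823232)*x^6*y^3*t^5 + (984254976)*x^6*y^3*t^9 + (-186624)*x^6*y^4 + (712437120)*x^6*y^4*t^4 + (-9641835648)*x^6*y^4*t^8 + (409126464)*x^6*y^5*t^3 + (-11387796480)*x^6*y^5*t^7 + (4618944)*x^6*y^6*t^2 + (-352719360)*x^6*y^6*t^6 + (-42690240)*x^6*y^7*t + (7477650432)*x^6*y^7*t^5 + (-3289248)*x^6*y^8 + (4507249536)*x^6*y^8*t^4 + (-63825408)*x^6*y^9*t^3 + (-697040640)*x^6*y^10*t^2 + (-77262336)*x^6*y^11*t + (34432128)*x^6*y^12 + (145800)*x^8*t^2 + (-14959080)*x^8*t^6 + (309049344)*x^8*t^10 + (116640)*x^8*y*t + (-60291216)*x^8*y*t^5 + (1746800640)*x^8*y*t^9 + (-29160)*x^8*y^2 + (-97715160)*x^8*y^2*t^4 + (3695155200)*x^8*y^2*t^8 + (-87130080)*x^8*y^3*t^3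 + (2902376448)*x^8*y^3*t^7 + (-53625240)*x^8*y^4*t^2 + (-1316818944)*x^8*y^4*t^6 + (-25019280)*x^8*y^5*t + (-4138573824)*x^8*y^5*t^5 + (-6141096)*x^8*y^6 + (-2821754880)*x^8*y^6*t^4 + (-537477120)*x^8*y^7*t^3 + (147806208)*x^8*y^8*t^2 + (26873856)*x^8*y^9*t + (-13436928)*x^8*y^10 + (-3888)*x^10 + (2118960)*x^10*t^4 + (-135302400)*x^10*t^8 + (447897600)*x^10*t^12 + (8825760)*x^10*y*t^3 + (-615859200)*x^10*y*t^7 + (3045703680)*x^10*y*t^11 + (13763520)*x^10*y^2*t^2 + (-874146816)*x^10*y^2*t^6 + (7882997760)*x^10*y^2*t^10 + (9525600)*x^10*y^3*t + (111227904)*x^10*y^3*t^5 + (7703838720)*x^10*y^3*t^9 + (2468880)*x^10*y^4 + (1584437760)*x^10*y^4*t^4 + (-4568555520)*x^10*y^4*t^8 + (1720673280)*x^10*y^5*t^3 + (-18274222080)*x^10*y^5*t^7 + (735298560)*x^10*y^6*t^2 + (-15049359360)*x^10*y^6*t^6 + (73903104)*x^10*y^7*t + (1074954240)*x^10*y^7*t^5 + (-20342016)*x^10*y^8 + (9943326720)*x^10*y^8*t^4 + (6628884480)*x^10*y^9*t^3 + (1433272320)*x^10*y^10*t^2 + (-179159040)*x^10*y^11*t + (-89579520)*x^10*y^12 + (68040)*x^12*t^2 + (-44976384)*x^12*t^6 + (667367424)*x^12*t^10 + (136080)*x^12*y*t + (-226188288)*x^12*y*t^5 + (4470018048)*x^12*y*t^9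 + (68040)*x^12*y^2 + (-456295680)*x^12*y^2*t^4 + (11936471040)*x^12*y^2*t^8 + (-462827520)*x^12*y^3*t^3 + (14655209472)*x^12*y^3*t^7 + (-237945600)*x^12*y^4*t^2 + (3699634176)*x^12*y^4*t^6 + (-51508224)*x^12*y^5*t + (-12164898816)*x^12*y^5*t^5 + (-1306368)*x^12*y^6 + (-15864532992)*x^12*y^6*t^4 + (-7703838720)*x^12*y^7*t^3 + (-640493568)*x^12*y^8*t^2 + (743510016)*x^12*y^9*t + (201553920)*x^12*y^10 + (1088640)*x^14*t^4 + (74649600)*x^14*t^8 + (4354560)*x^14*y*t^3 + (555393024)*x^14*y*t^7 + (6531840)*x^14*y^2*t^2 + (1797562368)*x^14*y^2*t^6 + (4354560)*x^14*y^3*t + (3302498304)*x^14*y^3*t^5 + (1088640)*x^14*y^4 + (3762339840)*x^14*y^4*t^4 + (2717245440)*x^14*y^5*t^3 + (1212309504)*x^14*y^6*t^2 + (304570368)*x^14*y^7*t + (32845824)*x^14*y^8 + (-23390208)*x^16*t^6 + (238878720)*x^16*t^10 + (-140341248)*x^16*y*t^5 + (1911029760)*x^16*y*t^9 + (-350853120)*x^16*y^2*t^4 + (6449725440)*x^16*y^2*t^8 + (-467804160)*x^16*y^3*t^3 + (11466178560)*x^16*y^3*t^7 + (-350853120)*x^16*y^4*t^2 + (10032906240)*x^16*y^4*t^6 + (-140341248)*x^16*y^5*t + (-23390208)*x^16*y^6 + (-10032906240)*x^16*y^6*t^4 + (-11466178560)*x^16*y^7*t^3 + (-6449725440)*x^16*y^8*t^2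 + (-1911029760)*x^16*y^9*t + (-238878720)*x^16*y^10 + (71663616)*x^18*t^8 + (573308928)*x^18*y*t^7 + (2006581248)*x^18*y^2*t^6 + (4013162496)*x^18*y^3*t^5 + (5016453120)*x^18*y^4*t^4 + (4013162496)*x^18*y^5*t^3 + (2006581248)*x^18*y^6*t^2 + (573308928)*x^18*y^7*t + (71663616)*x^18*y^8.

Lemma goodT2 : goodT Theta2.
Proof. split; simpl; lia. Qed.

Ltac rabs_simpl := repeat match goal with |- context [Rabs ?c] =>
  first [rewrite (Rabs_pos_eq c) by lra | rewrite (Rabs_left c) by lra] end.

Lemma abs_le_bounds a b : Rabs a <= b -> - b <= a <= b.
Proof. intros H. pose proof (Rabs_maj2 a). pose proof (Rle_abs a). lra. Qed.

Lemma Rabs_c (c : R) : 0 <= c -> Rabs c = c.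
Proof. apply Rabs_pos_eq. Qed.

Lemma bound2 : evalf (absE Theta2) (1/100) (1/100) (1/20) <= 1/20.
Proof. simpl. rabs_simpl. lra. Qed.

Definition rho2 : R := 1/100.
Definition tau2 : R := 1/20.
Definition h2 : R -> R -> R := DS (fixc Theta2).
Definition f2 (x y : R) : R := y + x ^ 4 * h2 x y.
Definition Ef2 : pex := EAdd EY (EMul (Epow EX 4) EV).

Lemma FP2 : Rep rho2 (fixc Theta2) h2 /\
  (forall x y, Rabs x < rho2 -> Rabs y < rho2 -> h2 x y = evalf Theta2 x y (h2 x y)) /\
  (forall x y, Rabs x <= rho2 -> Rabs y <= rho2 -> Rabs (h2 x y) <= tau2).
Proof.
  apply fixpoint; unfold rho2, tau2; try lra.
  - apply goodT2.
  - simpl; tauto.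
  - simpl; tauto.
  - apply bound2.
Qed.

Lemma Rep_f2 : Rep rho2 (evala Ef2 (fixc Theta2)) f2.
Proof.
  eapply Rep_ext. apply (Rep_eval rho2 Ef2 _ h2 (proj1 FP2)). simpl; tauto.
  intros x y _ _. unfold f2. simpl. ring.
Qed.

Lemma id_Phi2 x y h : evalf Phi2 x y (y + x ^ 4 * h) = 3 * x ^ 4 * (evalf Theta2 x y h - h).
Proof. simpl. field. Qed.
Lemma id_Pt2 x y h : evalf (dV Phi2) x y (y + x ^ 4 * h) = -3 + evalf RptE x y h.
Proof. simpl. field. Qed.
Lemma id_N2 x y h : let t := y + x ^ 4 * h in
  (evalf (dV Phi2) x y t) ^ 2 - (evalf (dX Phi2) x y t) ^ 2 - (evalf (dY Phi2) x y t) ^ 2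
  = x ^ 4 * (36 + evalf KE x y h).
Proof. intros t. unfold t. simpl. ring. Qed.
Lemma M2_zero x y t : evalf Phi2 x y t = 0 -> Mform Phi2 x y t = 0.
Proof.
  intros H. replace (Mform Phi2 x y t) with (Lam2 x y t * evalf Phi2 x y t).
  rewrite H; ring. unfold Mform, Lam2; cbv zeta. simpl. ring.
Qed.

Lemma noleaf_Phi2 : noleaf Phi2.
Proof. simpl. tauto. Qed.

Lemma box2_le x y : box rho2 x y -> Rabs x <= rho2 /\ Rabs y <= rho2.
Proof. intros [H1 H2]. lra. Qed.

Lemma h2_bound x y : box rho2 x y -> Rabs (h2 x y) <= tau2.
Proof. intros Hb. destruct (box2_le x y Hb). apply FP2; auto. Qed.

Lemma f2_Phi x y : box rho2 x y -> evalf Phi2 x y (f2 x y) = 0.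
Proof.
  intros [Hx Hy]. unfold f2. rewrite id_Phi2. rewrite <- (proj1 (proj2 FP2) x y Hx Hy). ring.
Qed.

Lemma RptE_bound : evalf (absE RptE) rho2 rho2 tau2 <= 1.
Proof. unfold rho2, tau2. simpl. rabs_simpl. lra. Qed.
Lemma KE_bound : evalf (absE KE) rho2 rho2 tau2 <= 1.
Proof. unfold rho2, tau2. simpl. rabs_simpl. lra. Qed.

Lemma f2_nz x y : box rho2 x y -> evalf (dV Phi2) x y (f2 x y) <> 0.
Proof.
  intros Hb. unfold f2. rewrite id_Pt2. destruct (box2_le x y Hb) as [Hx Hy].
  pose proof (eval_abs_bound RptE x y (h2 x y) rho2 rho2 tau2 ltac:(simpl; tauto) Hx Hy (h2_bound x y Hb)).
  pose proof RptE_bound. apply abs_le_bounds in H. lra.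
Qed.

Lemma f2_der : (forall x y, box rho2 x y -> ex_derive (fun s => f2 s y) x) /\
               (forall x y, box rho2 x y -> ex_derive (fun s => f2 x s) y).
Proof. apply (Rep_box_derive rho2 _ _ Rep_f2). Qed.

Lemma f2_BF x y : box rho2 x y -> BF f2 x y = x ^ 4 * (36 + evalf KE x y (h2 x y)) / (evalf (dV Phi2) x y (f2 x y)) ^ 2.
Proof.
  intros Hb. rewrite (BF_form Phi2 f2 rho2 x y noleaf_Phi2 f2_Phi (proj1 f2_der) (proj2 f2_der) f2_nz Hb).
  pose proof (id_N2 x y (h2 x y)) as E. cbv zeta in E. change (y + x ^ 4 * h2 x y) with (f2 x y) in E.
  rewrite E. reflexivity.
Qed.

Lemma f2_00 : f2 0 0 = 0.
Proof. unfold f2. ring. Qed.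

Lemma f2_BF_nonneg x y : box rho2 x y -> 0 <= BF f2 x y.
Proof.
  intros Hb. rewrite f2_BF by auto.
  destruct (box2_le x y Hb) as [Hx Hy].
  pose proof (eval_abs_bound KE x y (h2 x y) rho2 rho2 tau2 ltac:(simpl; tauto) Hx Hy (h2_bound x y Hb)).
  pose proof KE_bound. apply abs_le_bounds in H.
  pose proof (f2_nz x y Hb).
  apply Rmult_le_pos.
  - apply Rmult_le_pos. replace (x ^ 4) with ((x ^ 2) ^ 2) by ring. apply pow2_ge_0. lra.
  - apply Rlt_le, Rinv_0_lt_compat. apply pow2_gt_0. auto.
Qed.

Lemma f2_BF_nz x y : box rho2 x y -> x <> 0 -> BF f2 x y <> 0.
Proof.
  intros Hb Hx0. rewrite f2_BF by auto.
  destruct (box2_le x y Hb) as [Hx Hy].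
  pose proof (eval_abs_bound KE x y (h2 x y) rho2 rho2 tau2 ltac:(simpl; tauto) Hx Hy (h2_bound x y Hb)).
  pose proof KE_bound. apply abs_le_bounds in H.
  pose proof (f2_nz x y Hb). 
  unfold Rdiv. apply Rmult_integral_contrapositive. split.
  - apply Rmult_integral_contrapositive. split. apply pow_nonzero; auto. lra.
  - apply Rinv_neq_0_compat. apply pow_nonzero. auto.
Qed.

Theorem ex2 : Z0_I f2 /\ no_timelike_part f2.
Proof.
  destruct f2_der as [Hdx Hdy].
  assert (Hr : 0 < rho2) by (unfold rho2; lra).
  split.
  - split.
    + split; [|split].
      * split; [apply (Rep_analytic0 rho2 _ _ Hr Rep_f2)|]. split; [|split].
        -- split; [|split].
           ++ apply f2_00.
           ++ rewrite (ex_Dx Phi2 noleaf_Phi2 f2 rho2 f2_Phi Hdx f2_nz 0 0 (box0 rho2 Hr)).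
              rewrite f2_00. simpl. field.
           ++ rewrite (ex_Dy Phi2 noleaf_Phi2 f2 rho2 f2_Phi Hdy f2_nz 0 0 (box0 rho2 Hr)).
              rewrite f2_00. simpl. field.
        -- exists rho2. split; [lra|]. apply (dense_of_x rho2 (BF f2)); [lra|]. apply f2_BF_nz.
        -- exists rho2. split; [lra|]. intros x y Hb.
           apply (pipeline_AF Phi2 f2 rho2 x y); auto. apply noleaf_Phi2. apply f2_Phi.
           apply f2_nz. apply M2_zero.
      * rewrite (ex_BFdx Phi2 noleaf_Phi2 f2 rho2 f2_Phi Hdx Hdy f2_nz 0 0 (box0 rho2 Hr)).
        unfold EvX, EvY, G1, G2, PX, PY, PT, quot. rewrite f2_00. simpl. field.
      * rewrite (ex_BFdy Phi2 noleaf_Phi2 f2 rho2 f2_Phi Hdx Hdy f2_nz 0 0 (box0 rho2 Hr)).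
        unfold EvX, EvY, G1, G2, PX, PY, PT, quot. rewrite f2_00. simpl. field.
    + exists (fun _ => 0), (fun _ => 0), h2. split; [|split].
      * split; [|split; [|split]].
        -- apply (Rep_analytic0 1 (dC 0)); [lra| apply Rep_dC].
        -- apply (Rep_analytic0 1 (dC 0)); [lra| apply Rep_dC].
        -- apply (Rep_analytic0 rho2 _ _ Hr (proj1 FP2)).
        -- exists 1. split; [lra|]. intros x y _. unfold f2. field.
      * exists 1. split; [lra|]. intros y _. rewrite Derive_const. ring.
      * exists 1. split; [lra|]. auto.
  - exists rho2. split; [lra|]. apply f2_BF_nonneg.
Qed.

Definition sarr : arr := fun i j => match i with O => (-1) ^ j | _ => 0 end.
Definition sgm (x y : R) : R := 1 / (y + 1).

Lemma AS_sarr r : 0 <= r < 1 -> AS sarr r /\ Series (fun i => Series (fun j => Rabs (sarr i j) * r ^ (i + j))) = / (1 - r).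
Proof.
  intros Hr.
  assert (Hg : is_series (fun j => Rabs (sarr O j) * r ^ (0 + j)%nat) (/ (1 - r))).
  { eapply is_series_extR; [|apply is_series_geom; rewrite Rabs_pos_eq; lra].
    intros j. simpl. rewrite pow_1_abs. ring. }
  assert (H0 : forall i, (0 < i)%nat -> forall j, Rabs (sarr i j) * r ^ (i + j) = 0).
  { intros [|i] Hi j; [lia|]. simpl. rewrite Rabs_R0. ring. }
  assert (Hrow : forall i, is_series (fun j => Rabs (sarr i j) * r ^ (i + j)) (match i with O => / (1 - r) | _ => 0 end)).
  { intros [|i]; auto. apply is_series_zero. intros j. apply H0. lia. }
  assert (Hout : is_series (fun i => Series (fun j => Rabs (sarr i j) * r ^ (i + j))) (/ (1 - r))).
  { apply is_series_single0.
    - apply is_series_unique. auto.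
    - intros [|i] Hi; [lia|]. apply is_series_unique. apply (Hrow (S i)). }
  split; [split|].
  - intros i. eexists. apply Hrow.
  - eexists. exact Hout.
  - apply is_series_unique. auto.
Qed.

Lemma Rep_sarr rho : 0 < rho < 1 -> Rep rho sarr sgm.
Proof.
  intros Hr. split.
  - intros r Hr'. apply AS_sarr. lra.
  - intros x y Hx Hy. unfold DS, sgm. symmetry. apply is_series_unique.
    apply is_series_single0.
    + assert (Hg : is_series (fun j => sarr O j * x ^ 0 * y ^ j) (/ (1 - - y))).
      { eapply is_series_extR; [|apply (is_series_geom (- y))].
        - intros j. simpl. replace (- y) with (-1 * y) by ring. rewrite Rpow_mult_distr. ring.
        - rewrite Rabs_Ropp. lra. }
      rewrite (is_series_unique _ _ Hg). assert (Hy' : - y < 1) by (apply Rabs_def2 in Hy; lra).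
      field. lra.
    + intros [|i] Hi; [lia|]. apply Series_zero. intros j. simpl. ring.
Qed.

Definition rho3 : R := 1/10.
Definition tau3 : R := 1/20.
Definition M3 : R := 10/9.
Definition ES : pex := EL sarr sgm M3.
Definition EH : pex := Esub EV (EMul (EC (1/8)) (Epow ES 3)).
Definition Theta3 : pex :=
  EMul (EMul (EC (-1/2)) ES)
    (EAdd (EAdd (EAdd (EMul (EC (1/6)) (EMul EX ES)) (EMul (Epow EX 2) (EMul ES EH)))
                (EMul (EC (1/3)) (EMul (Epow EX 3) EH)))
          (EMul (Epow EX 4) (EMul EH EH))).
Definition Ef3 : pex :=
  EAdd (EAdd (EAdd EY (EMul (EC (1/2)) (EMul ES (Epow EX 2)))) (EMul (EC (1/3)) (Epow EX 3))) (EMul (Epow EX 4) EH).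
Definition Phi3 : pex :=
  EAdd (EMul (Esub (Esub EV EY) (EMul (EC (1/3)) (Epow EX 3))) (EAdd (EAdd EV EY) (EC 2))) (Eneg (Epow EX 2)).

Lemma goodT3 : goodT Theta3.
Proof. split; simpl; lia. Qed.

Lemma Rep_S : Rep rho3 sarr sgm.
Proof. apply Rep_sarr. unfold rho3; lra. Qed.

Lemma bd_S : forall N, tn rho3 N sarr <= M3.
Proof.
  intros N. destruct (AS_sarr rho3 ltac:(unfold rho3; lra)) as [HA HS].
  eapply Rle_trans. apply tn_le_AS; auto. unfold rho3; lra. rewrite HS. unfold M3, rho3. right. field.
Qed.

Lemma bound3 : evalf (absE Theta3) rho3 rho3 tau3 <= tau3.
Proof. unfold rho3, tau3. simpl. unfold M3. rabs_simpl. lra. Qed.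

Definition eta3 : R -> R -> R := DS (fixc Theta3).
Definition h3 (x y : R) : R := eta3 x y - 1/8 * sgm x y ^ 3.
Definition f3 (x y : R) : R := y + 1/2 * sgm x y * x ^ 2 + 1/3 * x ^ 3 + x ^ 4 * h3 x y.

Lemma FP3 : Rep rho3 (fixc Theta3) eta3 /\
  (forall x y, Rabs x < rho3 -> Rabs y < rho3 -> eta3 x y = evalf Theta3 x y (eta3 x y)) /\
  (forall x y, Rabs x <= rho3 -> Rabs y <= rho3 -> Rabs (eta3 x y) <= tau3).
Proof.
  apply fixpoint; unfold rho3, tau3; try lra.
  - apply goodT3.
  - simpl. pose proof Rep_S. unfold rho3 in H. tauto.
  - simpl. pose proof bd_S. unfold rho3 in H. tauto.
  - apply bound3.
Qed.

Lemma Rep_f3 : Rep rho3 (evala Ef3 (fixc Theta3)) f3.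
Proof.
  eapply Rep_ext. apply (Rep_eval rho3 Ef3 _ eta3 (proj1 FP3)). simpl. pose proof Rep_S. tauto.
  intros x y _ _. unfold f3, h3. simpl. ring.
Qed.

Lemma Rep_h3 : Rep rho3 (evala EH (fixc Theta3)) h3.
Proof.
  eapply Rep_ext. apply (Rep_eval rho3 EH _ eta3 (proj1 FP3)). simpl. pose proof Rep_S. tauto.
  intros x y _ _. unfold h3. simpl. ring.
Qed.

Lemma noleaf_Phi3 : noleaf Phi3.
Proof. simpl. tauto. Qed.

Lemma id_Phi3 x y e : y + 1 <> 0 ->
  evalf Phi3 x y (y + 1/2 * sgm x y * x ^ 2 + 1/3 * x ^ 3 + x ^ 4 * (e - 1/8 * sgm x y ^ 3))
  = 2 * (y + 1) * x ^ 4 * (e - evalf Theta3 x y e).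
Proof. intros H. simpl. unfold sgm. field. auto. Qed.

Lemma id_Pt3 x y t : evalf (dV Phi3) x y t = 2 * t + 2 - 1/3 * x ^ 3.
Proof. simpl. field. Qed.

Lemma id_N3 x y t :
  (evalf (dV Phi3) x y t) ^ 2 - (evalf (dX Phi3) x y t) ^ 2 - (evalf (dY Phi3) x y t) ^ 2
  = 4 * evalf Phi3 x y t - x ^ 3 * (t + y + 2) * (4 + x * (t + y + 2)).
Proof. simpl. field. Qed.

Lemma M3_zero x y t : evalf Phi3 x y t = 0 -> Mform Phi3 x y t = 0.
Proof.
  intros H. replace (Mform Phi3 x y t) with (((-64) + (-128)*t + (-64)*t^2 + (-64)*x + (-160)*x*t + (-128)*x*t^2 + (-32)*x*t^3 + (-32)*x*y + (-64)*x*y*t + (-32)*x*y*t^2 + (64/3)*x^3 + (64/3)*x^3*t + (64/3)*x^4 + (32)*x^4*t + (32/3)*x^4*t^2 + (32/3)*x^4*y + (32/3)*x^4*y*t + (-16/9)*x^6 + (-16/9)*x^7 + (-8/9)*x^7*t + (-8/9)*x^7*y) * evalf Phi3 x y t).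
  rewrite H; ring. unfold Mform; cbv zeta. simpl. field.
Qed.

Lemma box3_le x y : box rho3 x y -> Rabs x <= 1/10 /\ Rabs y <= 1/10.
Proof. intros [H1 H2]. unfold rho3 in *. lra. Qed.

Lemma sgm_bound x y : Rabs y <= 1/10 -> 0 < sgm x y <= 10/9.
Proof.
  intros Hy. apply abs_le_bounds in Hy. unfold sgm. split.
  - apply Rdiv_lt_0_compat; lra.
  - apply Rmult_le_reg_r with (y + 1); [lra|]. unfold Rdiv. rewrite Rmult_assoc, Rinv_l by lra. lra.
Qed.

Lemma f3_bound x y : box rho3 x y -> Rabs (f3 x y) <= 1/5.
Proof.
  intros Hb. destruct (box3_le x y Hb) as [Hx Hy].
  pose proof (sgm_bound x y Hy) as [Hs1 Hs2].
  assert (He : Rabs (eta3 x y) <= 1/20) by (apply FP3; unfold rho3; lra).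
  pose proof (pow_abs_le x (1/10) 2 Hx) as H2. pose proof (pow_abs_le x (1/10) 3 Hx) as H3.
  pose proof (pow_abs_le x (1/10) 4 Hx) as H4.
  assert (Hs3 : sgm x y ^ 3 <= (10/9) ^ 3) by (apply pow_incr; lra).
  assert (Hs3' : 0 <= sgm x y ^ 3) by (apply pow_le; lra).
  assert (Hh : Rabs (h3 x y) <= 1/4).
  { unfold h3. eapply Rle_trans. apply Rabs_triang. rewrite Rabs_Ropp, Rabs_mult.
    rewrite (Rabs_pos_eq (1/8)), (Rabs_pos_eq (sgm x y ^ 3)) by lra. simpl in Hs3. lra. }
  unfold f3. eapply Rle_trans. apply Rabs_triang. eapply Rle_trans. apply Rplus_le_compat_r. apply Rabs_triang.
  eapply Rle_trans. apply Rplus_le_compat_r, Rplus_le_compat_r. apply Rabs_triang.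
  rewrite !Rabs_mult. rewrite (Rabs_pos_eq (1/2)), (Rabs_pos_eq (1/3)), (Rabs_pos_eq (sgm x y)) by lra.
  assert (A1 : 1/2 * sgm x y * Rabs (x ^ 2) <= 1/2 * (10/9) * (1/10)^2).
  { apply Rmult_le_compat. apply Rmult_le_pos; lra. apply Rabs_pos. apply Rmult_le_compat_l; lra. auto. }
  assert (A2 : Rabs (x ^ 4) * Rabs (h3 x y) <= (1/10)^4 * (1/4)).
  { apply Rmult_le_compat; auto; apply Rabs_pos. }
  simpl in *. lra.
Qed.

Lemma f3_Phi x y : box rho3 x y -> evalf Phi3 x y (f3 x y) = 0.
Proof.
  intros Hb. destruct (box3_le x y Hb) as [Hx Hy]. apply abs_le_bounds in Hy.
  unfold f3, h3. rewrite id_Phi3 by lra. destruct Hb as [Hx' Hy'].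
  rewrite <- (proj1 (proj2 FP3) x y Hx' Hy'). ring.
Qed.

Lemma f3_Pt x y : box rho3 x y -> 1 <= evalf (dV Phi3) x y (f3 x y).
Proof.
  intros Hb. rewrite id_Pt3. pose proof (f3_bound x y Hb) as Hf. apply abs_le_bounds in Hf.
  destruct (box3_le x y Hb) as [Hx Hy]. pose proof (pow_abs_le x (1/10) 3 Hx) as H3.
  apply abs_le_bounds in H3. simpl in H3. lra.
Qed.

Lemma f3_nz x y : box rho3 x y -> evalf (dV Phi3) x y (f3 x y) <> 0.
Proof. intros Hb. pose proof (f3_Pt x y Hb). lra. Qed.

Lemma f3_der : (forall x y, box rho3 x y -> ex_derive (fun s => f3 s y) x) /\
               (forall x y, box rho3 x y -> ex_derive (fun s => f3 x s) y).
Proof. apply (Rep_box_derive rho3 _ _ Rep_f3). Qed.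

Lemma f3_BF x y : box rho3 x y -> BF f3 x y =
  - (x ^ 3 * (f3 x y + y + 2) * (4 + x * (f3 x y + y + 2))) / (evalf (dV Phi3) x y (f3 x y)) ^ 2.
Proof.
  intros Hb. rewrite (BF_form Phi3 f3 rho3 x y noleaf_Phi3 f3_Phi (proj1 f3_der) (proj2 f3_der) f3_nz Hb).
  rewrite id_N3, f3_Phi by auto. unfold Rdiv. ring.
Qed.

Lemma f3_w x y : box rho3 x y -> 1 <= f3 x y + y + 2 /\ 0 < 4 + x * (f3 x y + y + 2).
Proof.
  intros Hb. pose proof (f3_bound x y Hb) as Hf. apply abs_le_bounds in Hf.
  destruct (box3_le x y Hb) as [Hx Hy]. apply abs_le_bounds in Hx. apply abs_le_bounds in Hy.
  split. lra. nra.
Qed.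

Lemma f3_BF_sign x y : box rho3 x y -> (0 < x -> BF f3 x y < 0) /\ (x < 0 -> 0 < BF f3 x y).
Proof.
  intros Hb. rewrite f3_BF by auto. pose proof (f3_w x y Hb) as [Hw1 Hw2]. pose proof (f3_Pt x y Hb) as HP.
  assert (HP2 : 0 < (evalf (dV Phi3) x y (f3 x y)) ^ 2) by (apply pow_lt; lra).
  set (P := (evalf (dV Phi3) x y (f3 x y)) ^ 2) in *. set (w := f3 x y + y + 2) in *.
  split; intros Hx.
  - assert (0 < x ^ 3) by (apply pow_lt; lra).
    assert (0 < x ^ 3 * w * (4 + x * w)) by (apply Rmult_lt_0_compat; [apply Rmult_lt_0_compat|]; lra).
    unfold Rdiv. rewrite Ropp_mult_distr_l_reverse. apply Ropp_lt_gt_0_contravar.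
    apply Rmult_lt_0_compat; auto. apply Rinv_0_lt_compat; auto.
  - assert (0 < (- x) ^ 3) by (apply pow_lt; lra).
    assert (x ^ 3 = - ((- x) ^ 3)) by ring.
    assert (0 < (- x) ^ 3 * w * (4 + x * w)) by (apply Rmult_lt_0_compat; [apply Rmult_lt_0_compat|]; lra).
    replace (- (x ^ 3 * w * (4 + x * w)) / P) with (((- x) ^ 3 * w * (4 + x * w)) / P) by (unfold Rdiv; rewrite H0; ring).
    apply Rdiv_lt_0_compat; auto.
Qed.

Lemma f3_00 : f3 0 0 = 0.
Proof. unfold f3. ring. Qed.

Theorem ex3 : Z0_II f3 /\ changes_causal_type f3.
Proof.
  destruct f3_der as [Hdx Hdy].
  assert (Hr : 0 < rho3) by (unfold rho3; lra).
  split.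
  - split.
    + split; [|split].
      * split; [apply (Rep_analytic0 rho3 _ _ Hr Rep_f3)|]. split; [|split].
        -- split; [|split].
           ++ apply f3_00.
           ++ rewrite (ex_Dx Phi3 noleaf_Phi3 f3 rho3 f3_Phi Hdx f3_nz 0 0 (box0 rho3 Hr)).
              rewrite f3_00. simpl. field.
           ++ rewrite (ex_Dy Phi3 noleaf_Phi3 f3 rho3 f3_Phi Hdy f3_nz 0 0 (box0 rho3 Hr)).
              rewrite f3_00. simpl. field.
        -- exists rho3. split; [lra|]. apply (dense_of_x rho3 (BF f3)); [lra|].
           intros x y Hb Hx. destruct (f3_BF_sign x y Hb) as [A B].
           destruct (Rlt_or_le 0 x). apply A in H; lra. assert (x < 0) by lra. apply B in H0; lra.
        -- exists rho3. split; [lra|]. intros x y Hb.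
           apply (pipeline_AF Phi3 f3 rho3 x y); auto. apply noleaf_Phi3. apply f3_Phi.
           apply f3_nz. apply M3_zero.
      * rewrite (ex_BFdx Phi3 noleaf_Phi3 f3 rho3 f3_Phi Hdx Hdy f3_nz 0 0 (box0 rho3 Hr)).
        unfold EvX, EvY, G1, G2, PX, PY, PT, quot. rewrite f3_00. simpl. field.
      * rewrite (ex_BFdy Phi3 noleaf_Phi3 f3 rho3 f3_Phi Hdx Hdy f3_nz 0 0 (box0 rho3 Hr)).
        unfold EvX, EvY, G1, G2, PX, PY, PT, quot. rewrite f3_00. simpl. field.
    + exists (fun y => 1 / (y + 1)), (fun _ => 1), h3. split; [|split].
      * split; [|split; [|split]].
        -- exact (Rep_analytic0 rho3 _ _ Hr Rep_S).
        -- apply (Rep_analytic0 1 (dC 1)); [lra| apply Rep_dC].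
        -- apply (Rep_analytic0 rho3 _ _ Hr Rep_h3).
        -- exists rho3. split; [lra|]. intros x y _. unfold f3, sgm. cbv beta. unfold Rdiv. ring.
      * exists (1/2). split; [lra|]. intros y Hy. apply Rlt_le, abs_le_bounds in Hy.
        assert (Hd : is_derive (fun y => 1 / (y + 1)) y (-1 / (y + 1) ^ 2)).
        { auto_derive. lra. field. lra. }
        assert (HD : Derive (fun y : R => 1 / (y + 1)) y = -1 / (y + 1) ^ 2) by (apply is_derive_unique; exact Hd).
        cbv beta. rewrite HD. field. lra.
      * exists 1. split; [lra|]. exists 1. split; [lra|]. auto.
  - intros eps He. set (e := Rmin eps rho3 / 2).
    assert (He0 : 0 < e) by (unfold e; apply Rmin_case; lra).
    assert (He1 : e < eps) by (unfold e; pose proof (Rmin_l eps rho3); lra).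
    assert (He2 : e < rho3) by (unfold e; pose proof (Rmin_r eps rho3); lra).
    assert (Hb1 : box rho3 (- e) 0) by (split; [rewrite Rabs_Ropp, Rabs_pos_eq|rewrite Rabs_R0]; lra).
    assert (Hb2 : box rho3 e 0) by (split; [rewrite Rabs_pos_eq|rewrite Rabs_R0]; lra).
    split.
    + exists (- e), 0. split. split; [rewrite Rabs_Ropp, Rabs_pos_eq|rewrite Rabs_R0]; lra.
      apply (f3_BF_sign _ _ Hb1). lra.
    + exists e, 0. split. split; [rewrite Rabs_pos_eq|rewrite Rabs_R0]; lra.
      apply (f3_BF_sign _ _ Hb2). lra.
Qed.


Theorem corollary5p9 :
  (exists f : R -> R -> R, Z0_I f /\ no_spacelike_part f) /\
  (exists f : R -> R -> R, Z0_I f /\ no_timelike_part f) /\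
  (exists f : R -> R -> R, Z0_II f /\ changes_causal_type f).
Proof.
  split; [exists f1; exact ex1|]. split; [exists f2; exact ex2| exists f3; exact ex3].
Qed.
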